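(* For every 3-periodic $T$ of $E$ at which they are defined, the centers $X_{88}$ (trilinears $h=\dfrac{1}{s_2+s_3-2s_1}$) and $X_{100}$ (trilinears $h=\dfrac{1}{s_2-s_3}$) lie on $E$, and the closure of the locus of each of them is all of $E$.
   Context: Fix real numbers $a>b>0$ and let $E$ be the ellipse $x^2/a^2+y^2/b^2=1$. A 3-periodic is a non-degenerate triangle $P_1P_2P_3$ with all vertices on $E$ such that at each vertex $P_j$ the normal line to $E$ at $P_j$ bisects the interior angle of the triangle at $P_j$. For a triangle let $s_1=|P_2P_3|$, $s_2=|P_3P_1|$, $s_3=|P_1P_2|$. Given a function $h(s_1,s_2,s_3)$, the center $X_h$ is the point with trilinears $p:q:r=h(s_1,s_2,s_3):h(s_2,s_3,s_1):h(s_3,s_1,s_2)$, i.e. the Cartesian point $\dfrac{p s_1P_1+q s_2P_2+r s_3P_3}{p s_1+q s_2+r s_3}$, defined when all of $p,q,r$ are defined and the denominator is nonzero. The locus of $X_h$ is the set of points $X_h(T)$ over all 3-periodics $T$ for which it is defined. *)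

(* Defs.v *)
From Stdlib Require Import Reals.
Open Scope R_scope.

Definition pt := (R * R)%type.

Definition dist (P Q : pt) : R :=
  sqrt ((fst P - fst Q) ^ 2 + (snd P - snd Q) ^ 2).

Definition cross (u v : pt) : R := fst u * snd v - snd u * fst v.
Definition vsub (P Q : pt) : pt := (fst P - fst Q, snd P - snd Q).

Definition on_ellipse (a b : R) (P : pt) : Prop :=
  (fst P) ^ 2 / a ^ 2 + (snd P) ^ 2 / b ^ 2 = 1.

Definition ellipse_normal (a b : R) (P : pt) : pt :=
  (fst P / a ^ 2, snd P / b ^ 2).

Definition bisector_dir (P Q S : pt) : pt :=
  let u := vsub Q P in let v := vsub S P in
  let du := dist Q P in let dv := dist S P in
  (fst u / du + fst v / dv, snd u / du + snd v / dv).

Definition normal_bisects (a b : R) (P Q S : pt) : Prop :=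
  cross (ellipse_normal a b P) (bisector_dir P Q S) = 0.

Definition nondegenerate (P1 P2 P3 : pt) : Prop :=
  cross (vsub P2 P1) (vsub P3 P1) <> 0.

Definition periodic3 (a b : R) (P1 P2 P3 : pt) : Prop :=
  nondegenerate P1 P2 P3 /\
  on_ellipse a b P1 /\ on_ellipse a b P2 /\ on_ellipse a b P3 /\
  normal_bisects a b P1 P2 P3 /\
  normal_bisects a b P2 P3 P1 /\
  normal_bisects a b P3 P1 P2.

Definition trilin_fun := R -> R -> R -> option R.

(* X_h of triangle P1P2P3: trilinears p:q:r = h(s1,s2,s3):h(s2,s3,s1):h(s3,s1,s2),
   Cartesian point (p s1 P1 + q s2 P2 + r s3 P3)/(p s1 + q s2 + r s3). *)
Definition center (h : trilin_fun) (P1 P2 P3 : pt) : option pt :=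
  let s1 := dist P2 P3 in let s2 := dist P3 P1 in let s3 := dist P1 P2 in
  match h s1 s2 s3, h s2 s3 s1, h s3 s1 s2 with
  | Some p, Some q, Some r =>
      let w1 := p * s1 in let w2 := q * s2 in let w3 := r * s3 in
      let d := w1 + w2 + w3 in
      if Req_EM_T d 0 then None
      else Some ((w1 * fst P1 + w2 * fst P2 + w3 * fst P3) / d,
                 (w1 * snd P1 + w2 * snd P2 + w3 * snd P3) / d)
  | _, _, _ => None
  end.

Definition h88 : trilin_fun := fun s1 s2 s3 =>
  if Req_EM_T (s2 + s3 - 2 * s1) 0 then None else Some (/ (s2 + s3 - 2 * s1)).

Definition h100 : trilin_fun := fun s1 s2 s3 =>
  if Req_EM_T (s2 - s3) 0 then None else Some (/ (s2 - s3)).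

Definition locus (a b : R) (h : trilin_fun) (X : pt) : Prop :=
  exists P1 P2 P3, periodic3 a b P1 P2 P3 /\ center h P1 P2 P3 = Some X.

Definition in_closure (S : pt -> Prop) (X : pt) : Prop :=
  forall eps, eps > 0 -> exists Y, S Y /\ dist X Y < eps.

(* Main.v *)
Require Import Defs.
From Stdlib Require Import Reals Lra Psatz.
Open Scope R_scope.

Definition Qf (a b : R) (P : pt) : R := fst P ^ 2 / a ^ 2 + snd P ^ 2 / b ^ 2.

Lemma dist_sym (P Q : pt) : Defs.dist P Q = Defs.dist Q P.
Proof. unfold Defs.dist. f_equal. ring. Qed.

Lemma dist_sq (P Q : pt) : Defs.dist P Q * Defs.dist P Q = (fst P - fst Q)^2 + (snd P - snd Q)^2.
Proof. unfold Defs.dist. apply sqrt_sqrt. apply Rplus_le_le_0_compat; apply pow2_ge_0. Qed.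

Lemma dist_nonneg (P Q : pt) : 0 <= Defs.dist P Q.
Proof. unfold Defs.dist. apply sqrt_pos. Qed.

Lemma sumsq0 (p q : R) : 0 = p^2 + q^2 -> p = 0 /\ q = 0.
Proof. intros h. split; nra. Qed.

Lemma vertex_ratio (a b : R) (P Q S : pt) :
  a <> 0 -> b <> 0 ->
  on_ellipse a b P -> on_ellipse a b Q -> on_ellipse a b S ->
  cross (vsub Q P) (vsub S P) <> 0 ->
  normal_bisects a b P Q S ->
  Qf a b (vsub Q P) * Defs.dist S P = Qf a b (vsub S P) * Defs.dist Q P.
Proof.
  intros ha hb eP eQ eS hnd hnb.
  destruct P as [x y], Q as [xq yq], S as [xs ys].
  unfold on_ellipse, normal_bisects, bisector_dir, ellipse_normal, cross, vsub, Qf in *; cbn [fst snd] in *.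
  set (dq := Defs.dist (xq, yq) (x, y)) in *.
  set (ds := Defs.dist (xs, ys) (x, y)) in *.
  assert (hdq : dq * dq = (xq - x)^2 + (yq - y)^2) by (apply dist_sq).
  assert (hds : ds * ds = (xs - x)^2 + (ys - y)^2) by (apply dist_sq).
  assert (dq0 : 0 <= dq) by apply dist_nonneg.
  assert (ds0 : 0 <= ds) by apply dist_nonneg.
  assert (dqp : dq <> 0).
  { intro h. rewrite h in hdq. apply hnd. destruct (sumsq0 (xq - x) (yq - y)) as [H H0]; [lra|].
    rewrite H, H0. ring. }
  assert (dsp : ds <> 0).
  { intro h. rewrite h in hds. apply hnd. destruct (sumsq0 (xs - x) (ys - y)) as [H H0]; [lra|].
    rewrite H, H0. ring. }
  set (u1 := (xq - x) / dq). set (u2 := (yq - y) / dq).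
  set (v1 := (xs - x) / ds). set (v2 := (ys - y) / ds).
  assert (hu : u1 * u1 + u2 * u2 = 1).
  { unfold u1, u2. transitivity (((xq - x)^2 + (yq - y)^2) / (dq * dq)); [field; auto|].
    rewrite <- hdq. field; auto. }
  assert (hv : v1 * v1 + v2 * v2 = 1).
  { unfold v1, v2. transitivity (((xs - x)^2 + (ys - y)^2) / (ds * ds)); [field; auto|].
    rewrite <- hds. field; auto. }
  set (n1 := x / a ^ 2) in *. set (n2 := y / b ^ 2) in *.
  set (c1 := u1 + v1). set (c2 := u2 + v2). set (d1 := u1 - v1). set (d2 := u2 - v2).
  assert (hcd : c1 * d1 + c2 * d2 = 0) by (unfold c1, c2, d1, d2; nra).
  assert (hcc : c1 * c1 + c2 * c2 <> 0).
  { intro h. assert (c1 = 0) by nra. assert (c2 = 0) by nra.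
    apply hnd.
    assert (xq - x = u1 * dq) by (unfold u1; field; auto).
    assert (yq - y = u2 * dq) by (unfold u2; field; auto).
    assert (xs - x = v1 * ds) by (unfold v1; field; auto).
    assert (ys - y = v2 * ds) by (unfold v2; field; auto).
    rewrite H1, H2, H3, H4.
    assert (v1 = - u1) by (unfold c1 in H; lra).
    assert (v2 = - u2) by (unfold c2 in H0; lra).
    rewrite H5, H6. ring. }
  assert (hcr : n1 * c2 - n2 * c1 = 0) by (unfold c1, c2, u1, u2, v1, v2; exact hnb).
  assert (key : (c1*c1 + c2*c2) * (n1 * d1 + n2 * d2) =
     (n1 * c1 + n2 * c2) * (c1 * d1 + c2 * d2) + (c1 * n2 - c2 * n1) * (c1 * d2 - c2 * d1)) by ring.
  rewrite hcd in key.
  assert (hnd0 : n1 * d1 + n2 * d2 = 0).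
  { assert (c1 * n2 - c2 * n1 = 0) by lra.
    rewrite H in key. rewrite Rmult_0_r, Rmult_0_l, Rplus_0_r in key. apply (Rmult_integral (c1*c1+c2*c2)) in key.
    destruct key; [contradiction | nra]. }
  unfold d1, d2, u1, u2, v1, v2, n1, n2 in hnd0.
  assert (A1 : x * (xq - x) / a^2 + y * (yq - y) / b^2 = -((xq - x) ^ 2 / a ^ 2 + (yq - y) ^ 2 / b ^ 2) / 2).
  { assert (x * (xq - x) / a^2 + y * (yq - y) / b^2 - (-((xq - x) ^ 2 / a ^ 2 + (yq - y) ^ 2 / b ^ 2) / 2)
       = ((xq ^ 2 / a ^ 2 + yq ^ 2 / b ^ 2) - (x ^ 2 / a ^ 2 + y ^ 2 / b ^ 2)) / 2) by (field; auto).
    rewrite eP, eQ in H. lra. }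
  assert (A2 : x * (xs - x) / a^2 + y * (ys - y) / b^2 = -((xs - x) ^ 2 / a ^ 2 + (ys - y) ^ 2 / b ^ 2) / 2).
  { assert (x * (xs - x) / a^2 + y * (ys - y) / b^2 - (-((xs - x) ^ 2 / a ^ 2 + (ys - y) ^ 2 / b ^ 2) / 2)
       = ((xs ^ 2 / a ^ 2 + ys ^ 2 / b ^ 2) - (x ^ 2 / a ^ 2 + y ^ 2 / b ^ 2)) / 2) by (field; auto).
    rewrite eP, eS in H. lra. }
  assert (B : (x * (xq - x) / a^2 + y * (yq - y) / b^2) * ds = (x * (xs - x) / a^2 + y * (ys - y) / b^2) * dq).
  { assert (E : x / a ^ 2 * ((xq - x) / dq - (xs - x) / ds) + y / b ^ 2 * ((yq - y) / dq - (ys - y) / ds)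
       = ((x * (xq - x) / a^2 + y * (yq - y) / b^2) * ds - (x * (xs - x) / a^2 + y * (ys - y) / b^2) * dq) / (dq * ds))
      by (field; auto).
    rewrite E in hnd0.
    assert (dq * ds <> 0) by (apply Rmult_integral_contrapositive; auto).
    unfold Rdiv in hnd0. apply Rmult_integral in hnd0. destruct hnd0 as [h0|h0]; [lra|].
    exfalso. apply (Rinv_neq_0_compat (dq*ds)); auto. }
  rewrite A1, A2 in B. lra.
Qed.

Definition hL (al be ga : R) : trilin_fun := fun s1 s2 s3 =>
  if Req_EM_T (al * s1 + be * s2 + ga * s3) 0 then None else Some (/ (al * s1 + be * s2 + ga * s3)).

Lemma center_ext (h h' : trilin_fun) P1 P2 P3 :
  (forall x y z, h x y z = h' x y z) -> center h P1 P2 P3 = center h' P1 P2 P3.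
Proof. intros H. unfold center. rewrite !H. reflexivity. Qed.

Lemma h88_L x y z : h88 x y z = hL (-2) 1 1 x y z.
Proof. unfold h88, hL. replace (-2 * x + 1 * y + 1 * z) with (y + z - 2 * x) by ring. reflexivity. Qed.

Lemma h100_L x y z : h100 x y z = hL 0 1 (-1) x y z.
Proof. unfold h100, hL. replace (0 * x + 1 * y + -1 * z) with (y - z) by ring. reflexivity. Qed.

Lemma Qf_neg a b P Q : Qf a b (vsub P Q) = Qf a b (vsub Q P).
Proof. unfold Qf, vsub; cbn [fst snd]. unfold Rdiv. ring. Qed.

Lemma nondeg_pos P1 P2 P3 : nondegenerate P1 P2 P3 -> 0 < Defs.dist P1 P2.
Proof.
  intros hnd. destruct (Rle_lt_or_eq_dec 0 _ (dist_nonneg P1 P2)) as [h|h]; auto.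
  exfalso. apply hnd. pose proof (dist_sq P1 P2) as e. rewrite <- h in e.
  destruct (sumsq0 (fst P1 - fst P2) (snd P1 - snd P2)) as [h1 h2]; [lra|].
  unfold cross, vsub; cbn [fst snd].
  replace (fst P2 - fst P1) with 0 by lra. replace (snd P2 - snd P1) with 0 by lra. ring.
Qed.

Lemma nondeg_rot P1 P2 P3 : nondegenerate P1 P2 P3 -> nondegenerate P2 P3 P1.
Proof. unfold nondegenerate, cross, vsub; cbn [fst snd]. intros h e; apply h.
  replace ((fst P2 - fst P1) * (snd P3 - snd P1) - (snd P2 - snd P1) * (fst P3 - fst P1))
    with ((fst P3 - fst P2) * (snd P1 - snd P2) - (snd P3 - snd P2) * (fst P1 - fst P2)) by ring. exact e. Qed.

Lemma center_on_ellipse (al be ga a b : R) P1 P2 P3 X :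
  al + be + ga = 0 -> a <> 0 -> b <> 0 ->
  periodic3 a b P1 P2 P3 -> center (hL al be ga) P1 P2 P3 = Some X -> on_ellipse a b X.
Proof.
  intros hs ha hb [hnd [e1 [e2 [e3 [n1 [n2 n3]]]]]] hc.
  pose proof (vertex_ratio a b P1 P2 P3 ha hb e1 e2 e3 hnd n1) as R1.
  pose proof (vertex_ratio a b P2 P3 P1 ha hb e2 e3 e1 (nondeg_rot _ _ _ hnd) n2) as R2.
  pose proof (nondeg_pos _ _ _ hnd) as p3.
  pose proof (nondeg_pos _ _ _ (nondeg_rot _ _ _ hnd)) as p1.
  pose proof (nondeg_pos _ _ _ (nondeg_rot _ _ _ (nondeg_rot _ _ _ hnd))) as p2.
  rewrite (dist_sym P2 P1) in R1.
  rewrite (dist_sym P3 P2) in R2.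
  rewrite (Qf_neg a b P1 P2) in R2.
  unfold center in hc.
  set (s1 := Defs.dist P2 P3) in *. set (s2 := Defs.dist P3 P1) in *. set (s3 := Defs.dist P1 P2) in *.
  set (q3 := Qf a b (vsub P2 P1)) in *. set (q2 := Qf a b (vsub P3 P1)) in *.
  set (q1 := Qf a b (vsub P3 P2)) in *.
  unfold hL in hc.
  destruct (Req_EM_T (al * s1 + be * s2 + ga * s3) 0) as [z1|z1]; [discriminate|].
  destruct (Req_EM_T (al * s2 + be * s3 + ga * s1) 0) as [z2|z2]; [discriminate|].
  destruct (Req_EM_T (al * s3 + be * s1 + ga * s2) 0) as [z3|z3]; [discriminate|].
  set (L1 := al * s1 + be * s2 + ga * s3) in *.
  set (L2 := al * s2 + be * s3 + ga * s1) in *.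
  set (L3 := al * s3 + be * s1 + ga * s2) in *.
  set (w1 := / L1 * s1) in *. set (w2 := / L2 * s2) in *. set (w3 := / L3 * s3) in *.
  destruct (Req_EM_T (w1 + w2 + w3) 0) as [zd|zd]; [discriminate|].
  injection hc as hc. subst X.
  destruct P1 as [x1 y1], P2 as [x2 y2], P3 as [x3 y3].
  unfold on_ellipse, Qf, vsub in *; cbn [fst snd] in *.
  set (d := w1 + w2 + w3) in *.
  assert (Hid : ((w1 * x1 + w2 * x2 + w3 * x3) / d) ^ 2 / a ^ 2 + ((w1 * y1 + w2 * y2 + w3 * y3) / d) ^ 2 / b ^ 2
    = (w1^2 * (x1 ^ 2 / a ^ 2 + y1 ^ 2 / b ^ 2) + w2^2 * (x2 ^ 2 / a ^ 2 + y2 ^ 2 / b ^ 2)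
       + w3^2 * (x3 ^ 2 / a ^ 2 + y3 ^ 2 / b ^ 2)
       + w1 * w2 * ((x1 ^ 2 / a ^ 2 + y1 ^ 2 / b ^ 2) + (x2 ^ 2 / a ^ 2 + y2 ^ 2 / b ^ 2) - q3)
       + w2 * w3 * ((x2 ^ 2 / a ^ 2 + y2 ^ 2 / b ^ 2) + (x3 ^ 2 / a ^ 2 + y3 ^ 2 / b ^ 2) - q1)
       + w1 * w3 * ((x1 ^ 2 / a ^ 2 + y1 ^ 2 / b ^ 2) + (x3 ^ 2 / a ^ 2 + y3 ^ 2 / b ^ 2) - q2)) / d ^ 2).
  { unfold q1, q2, q3. field. auto. }
  rewrite Hid, e1, e2, e3.
  assert (Hz : w1 * w2 * q3 + w2 * w3 * q1 + w1 * w3 * q2 = 0).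
  { assert (q2 = q3 * s2 / s3).
    { replace q2 with (q2 * s3 / s3) by (field; lra). rewrite <- R1. reflexivity. }
    assert (q1 = q3 * s1 / s3).
    { replace q1 with (q1 * s3 / s3) by (field; lra). rewrite R2. reflexivity. }
    rewrite H, H0. unfold w1, w2, w3.
    assert (L1 + L2 + L3 = 0) by (unfold L1, L2, L3; replace ga with (- al - be) by lra; ring).
    assert (HL3 : L3 = - L1 - L2) by lra.
    rewrite HL3. rewrite HL3 in z3. field. repeat split; lra. }
  transitivity ((d^2 - (w1 * w2 * q3 + w2 * w3 * q1 + w1 * w3 * q2)) / d ^ 2).
  { unfold d. field. auto. }
  rewrite Hz. field. auto.
Qed.

Lemma vertex_from_ratio (a b : R) (P Q S : pt) :
  a <> 0 -> b <> 0 ->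
  on_ellipse a b P -> on_ellipse a b Q -> on_ellipse a b S ->
  cross (vsub Q P) (vsub S P) <> 0 ->
  Qf a b (vsub Q P) * Defs.dist S P = Qf a b (vsub S P) * Defs.dist Q P ->
  normal_bisects a b P Q S.
Proof.
  intros ha hb eP eQ eS hnd hr.
  destruct P as [x y], Q as [xq yq], S as [xs ys].
  unfold on_ellipse, normal_bisects, bisector_dir, ellipse_normal, cross, vsub, Qf in *; cbn [fst snd] in *.
  set (dq := Defs.dist (xq, yq) (x, y)) in *.
  set (ds := Defs.dist (xs, ys) (x, y)) in *.
  assert (hdq : dq * dq = (xq - x)^2 + (yq - y)^2) by (apply dist_sq).
  assert (hds : ds * ds = (xs - x)^2 + (ys - y)^2) by (apply dist_sq).
  assert (dqp : dq <> 0).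
  { intro h. rewrite h in hdq. apply hnd. destruct (sumsq0 (xq - x) (yq - y)) as [H H0]; [lra|].
    rewrite H, H0. ring. }
  assert (dsp : ds <> 0).
  { intro h. rewrite h in hds. apply hnd. destruct (sumsq0 (xs - x) (ys - y)) as [H H0]; [lra|].
    rewrite H, H0. ring. }
  assert (A1 : x * (xq - x) / a^2 + y * (yq - y) / b^2 = -((xq - x) ^ 2 / a ^ 2 + (yq - y) ^ 2 / b ^ 2) / 2).
  { assert (x * (xq - x) / a^2 + y * (yq - y) / b^2 - (-((xq - x) ^ 2 / a ^ 2 + (yq - y) ^ 2 / b ^ 2) / 2)
       = ((xq ^ 2 / a ^ 2 + yq ^ 2 / b ^ 2) - (x ^ 2 / a ^ 2 + y ^ 2 / b ^ 2)) / 2) by (field; auto).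
    rewrite eP, eQ in H. lra. }
  assert (A2 : x * (xs - x) / a^2 + y * (ys - y) / b^2 = -((xs - x) ^ 2 / a ^ 2 + (ys - y) ^ 2 / b ^ 2) / 2).
  { assert (x * (xs - x) / a^2 + y * (ys - y) / b^2 - (-((xs - x) ^ 2 / a ^ 2 + (ys - y) ^ 2 / b ^ 2) / 2)
       = ((xs ^ 2 / a ^ 2 + ys ^ 2 / b ^ 2) - (x ^ 2 / a ^ 2 + y ^ 2 / b ^ 2)) / 2) by (field; auto).
    rewrite eP, eS in H. lra. }
  set (u1 := (xq - x) / dq). set (u2 := (yq - y) / dq).
  set (v1 := (xs - x) / ds). set (v2 := (ys - y) / ds).
  assert (hu : u1 * u1 + u2 * u2 = 1).
  { unfold u1, u2. transitivity (((xq - x)^2 + (yq - y)^2) / (dq * dq)); [field; auto|].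
    rewrite <- hdq. field; auto. }
  assert (hv : v1 * v1 + v2 * v2 = 1).
  { unfold v1, v2. transitivity (((xs - x)^2 + (ys - y)^2) / (ds * ds)); [field; auto|].
    rewrite <- hds. field; auto. }
  set (n1 := x / a ^ 2). set (n2 := y / b ^ 2).
  set (c1 := u1 + v1). set (c2 := u2 + v2). set (d1 := u1 - v1). set (d2 := u2 - v2).
  assert (hcd : c1 * d1 + c2 * d2 = 0) by (unfold c1, c2, d1, d2; nra).
  assert (hnd0 : n1 * d1 + n2 * d2 = 0).
  { unfold n1, n2, d1, d2, u1, u2, v1, v2.
    assert (E : x / a ^ 2 * ((xq - x) / dq - (xs - x) / ds) + y / b ^ 2 * ((yq - y) / dq - (ys - y) / ds)
       = ((x * (xq - x) / a^2 + y * (yq - y) / b^2) * ds - (x * (xs - x) / a^2 + y * (ys - y) / b^2) * dq) / (dq * ds))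
      by (field; auto).
    rewrite E, A1, A2.
    replace ((- ((xq - x) ^ 2 / a ^ 2 + (yq - y) ^ 2 / b ^ 2) / 2 * ds -
      - ((xs - x) ^ 2 / a ^ 2 + (ys - y) ^ 2 / b ^ 2) / 2 * dq)) with 0 by lra.
    unfold Rdiv. ring. }
  assert (hdd : d1 * d1 + d2 * d2 <> 0).
  { intro h. assert (d1 = 0) by nra. assert (d2 = 0) by nra.
    apply hnd.
    assert (xq - x = u1 * dq) by (unfold u1; field; auto).
    assert (yq - y = u2 * dq) by (unfold u2; field; auto).
    assert (xs - x = v1 * ds) by (unfold v1; field; auto).
    assert (ys - y = v2 * ds) by (unfold v2; field; auto).
    rewrite H1, H2, H3, H4.
    assert (v1 = u1) by (unfold d1 in H; lra).
    assert (v2 = u2) by (unfold d2 in H0; lra).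
    rewrite H5, H6. ring. }
  assert (key : (n1 * c2 - n2 * c1) * (d1 * d1 + d2 * d2) =
     (n1 * d1 + n2 * d2) * (d1 * c2 - d2 * c1) - (c1 * d1 + c2 * d2) * (d1 * n2 - d2 * n1)) by ring.
  rewrite hcd, hnd0 in key.
  rewrite Rmult_0_l, Rmult_0_l, Rminus_0_r in key.
  apply Rmult_integral in key. destruct key as [k|k]; [|contradiction].
  unfold n1, n2, c1, c2, u1, u2, v1, v2 in k. exact k.
Qed.

Lemma sq_bound (x e1 e : R) : Rabs e1 < e -> e <= 1 ->
  Rabs (2 * x * e1 + e1 * e1) <= (2 * Rabs x + 1) * e.
Proof.
  intros h1 h2.
  eapply Rle_trans; [apply Rabs_triang|].
  rewrite !Rabs_mult. rewrite (Rabs_right 2) by lra.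
  pose proof (Rabs_pos x). pose proof (Rabs_pos e1). nra.
Qed.

Lemma closure_on_ellipse (a b : R) (S : pt -> Prop) (X : pt) :
  0 < a -> 0 < b -> (forall Y, S Y -> on_ellipse a b Y) -> in_closure S X -> on_ellipse a b X.
Proof.
  intros ha hb HS HC. destruct X as [x y]. unfold on_ellipse; cbn [fst snd].
  set (M := (2 * Rabs x + 1) / a ^ 2 + (2 * Rabs y + 1) / b ^ 2).
  assert (Ma : 0 < a ^ 2) by (apply pow_lt; lra).
  assert (Mb : 0 < b ^ 2) by (apply pow_lt; lra).
  assert (Mp : 0 < M).
  { unfold M. pose proof (Rabs_pos x). pose proof (Rabs_pos y).
    apply Rplus_lt_0_compat; apply Rdiv_lt_0_compat; lra. }
  assert (key : forall e, 0 < e -> e <= 1 -> Rabs (x ^ 2 / a ^ 2 + y ^ 2 / b ^ 2 - 1) <= M * e).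
  { intros e he he1. destruct (HC e he) as [[y1 y2] [hY hd]].
    pose proof (HS _ hY) as eY. unfold on_ellipse in eY; cbn [fst snd] in eY.
    pose proof (dist_sq (x, y) (y1, y2)) as ds. pose proof (dist_nonneg (x, y) (y1, y2)) as dn.
    cbn [fst snd] in ds.
    set (e1 := y1 - x). set (e2 := y2 - y).
    assert (he12 : e1 ^ 2 + e2 ^ 2 < e * e) by (unfold e1, e2; nra).
    assert (a1 : Rabs e1 < e).
    { apply Rabs_def1; nra. }
    assert (a2 : Rabs e2 < e).
    { apply Rabs_def1; nra. }
    assert (E : x ^ 2 / a ^ 2 + y ^ 2 / b ^ 2 - 1 =
       - ((2 * x * e1 + e1 * e1) / a ^ 2 + (2 * y * e2 + e2 * e2) / b ^ 2)).
    { rewrite <- eY. unfold e1, e2. field. split; lra. }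
    rewrite E, Rabs_Ropp.
    eapply Rle_trans; [apply Rabs_triang|].
    unfold Rdiv. rewrite !Rabs_mult.
    rewrite (Rabs_right (/ a ^ 2)) by (left; apply Rinv_0_lt_compat; lra).
    rewrite (Rabs_right (/ b ^ 2)) by (left; apply Rinv_0_lt_compat; lra).
    pose proof (sq_bound x e1 e a1 he1). pose proof (sq_bound y e2 e a2 he1).
    unfold M, Rdiv.
    assert (0 < / a ^ 2) by (apply Rinv_0_lt_compat; lra).
    assert (0 < / b ^ 2) by (apply Rinv_0_lt_compat; lra).
    nra. }
  destruct (Req_dec (x ^ 2 / a ^ 2 + y ^ 2 / b ^ 2 - 1) 0) as [h0|h0].
  - lra.
  - pose proof (Rabs_pos_lt _ h0) as dp.
    set (d := Rabs (x ^ 2 / a ^ 2 + y ^ 2 / b ^ 2 - 1)) in *.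
    exfalso.
    set (e := Rmin 1 (d / (2 * M))).
    assert (e1 : e <= 1) by apply Rmin_l.
    assert (e2 : e <= d / (2 * M)) by apply Rmin_r.
    assert (e0 : 0 < e) by (apply Rmin_pos; [lra | apply Rdiv_lt_0_compat; lra]).
    pose proof (key e e0 e1).
    assert (M * e <= M * (d / (2 * M))) by (apply Rmult_le_compat_l; lra).
    assert (M * (d / (2 * M)) = d / 2) by (field; lra).
    lra.
Qed.

Definition rr (a b : R) := (a^2 + b^2) / (a^2 - b^2).
Definition c0 (a b : R) := rr a b - sqrt (rr a b ^ 2 + 3).
Definition KK (a b : R) := - c0 a b / (a^2 - b^2).
Definition kap (a b : R) := sqrt (KK a b).

Lemma consts (a b : R) : 0 < b -> b < a ->
  -1 < c0 a b < 0 /\ 2 * KK a b * (a^2 + b^2) = 3 - c0 a b ^ 2 /\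
  2 * KK a b * (a^2 - b^2) = - 2 * c0 a b /\ 0 < KK a b /\ 0 < kap a b /\ kap a b * kap a b = KK a b.
Proof.
  intros hb hab.
  assert (hd : 0 < a^2 - b^2) by nra.
  assert (hr : 1 < rr a b).
  { unfold rr. apply (Rmult_lt_reg_r (a^2 - b^2)); auto. unfold Rdiv. rewrite Rmult_assoc, Rinv_l by lra. nra. }
  set (r := rr a b) in *.
  assert (hs2 : sqrt (r^2+3) * sqrt (r^2+3) = r^2+3) by (apply sqrt_sqrt; nra).
  assert (hs0 : 0 <= sqrt (r^2+3)) by apply sqrt_pos.
  assert (hc : -1 < c0 a b < 0) by (unfold c0; fold r; split; nra).
  assert (hq : c0 a b ^ 2 - 2 * r * c0 a b - 3 = 0) by (unfold c0; fold r; nra).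
  assert (hK : 0 < KK a b) by (unfold KK; apply Rdiv_lt_0_compat; lra).
  split; [auto|]. split.
  { unfold KK. replace (a^2 + b^2) with (r * (a^2 - b^2)) by (unfold r, rr; field; lra).
    field_simplify; [|lra]. nra. }
  split; [unfold KK; field; lra|]. split; [auto|]. split.
  - unfold kap. apply sqrt_lt_R0; auto.
  - unfold kap. apply sqrt_sqrt; lra.
Qed.

Lemma chord (c x1 y1 x2 y2 x3 y3 : R) :
  x1^2 + y1^2 = 1 -> x2^2 + y2^2 = 1 -> x3^2 + y3^2 = 1 ->
  (x1*x2 - y1*y2) + (x2*x3 - y2*y3) + (x3*x1 - y3*y1) = c ->
  (x1*y2 + y1*x2) + (x2*y3 + y2*x3) + (x3*y1 + y3*x1) = 0 ->
  (x1 - x2)^2 + (y1 - y2)^2 = 3 - c^2 + 2 * c * (x1*x2 - y1*y2).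
Proof.
  intros u1 u2 u3 hre him.
  set (p1 := x1 + x2). set (p2 := y1 + y2). set (m1 := x1*x2 - y1*y2). set (m2 := x1*y2 + y1*x2).
  assert (e1 : x3 * p1 - y3 * p2 = c - m1) by (unfold p1, p2, m1; lra).
  assert (e2 : x3 * p2 + y3 * p1 = - m2) by (unfold p1, p2, m2; lra).
  assert (e3 : (x3 * p1 - y3 * p2)^2 + (x3 * p2 + y3 * p1)^2 = (x3^2+y3^2) * (p1^2+p2^2)) by ring.
  rewrite e1, e2, u3 in e3.
  assert (e4 : m1^2 + m2^2 = (x1^2+y1^2)*(x2^2+y2^2)) by (unfold m1, m2; ring).
  rewrite u1, u2 in e4.
  assert (e5 : (x1 - x2)^2 + (y1 - y2)^2 + (p1^2 + p2^2) = 2 * (x1^2+y1^2) + 2 * (x2^2+y2^2)) by (unfold p1, p2; ring).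
  rewrite u1, u2 in e5.
  fold m1. nra.
Qed.

Definition Dq (z w : pt) := (fst z - fst w)^2 + (snd z - snd w)^2.
Definition Rm (z w : pt) := fst z * fst w - snd z * snd w.
Definition Tp (a b : R) (z : pt) : pt := (a * fst z, b * snd z).
Definition unit (z : pt) := fst z ^ 2 + snd z ^ 2 = 1.

Lemma diffsq_id (xi yi xj yj : R) : xi^2+yi^2 = 1 -> xj^2+yj^2 = 1 ->
  (xi-xj)^2 - (yi-yj)^2 = -((xi-xj)^2+(yi-yj)^2)*(xi*xj-yi*yj).
Proof.
  intros hi hj.
  assert (E : (xi-xj)^2 - (yi-yj)^2 + ((xi-xj)^2+(yi-yj)^2)*(xi*xj-yi*yj) =
     ((-1) + xi*xj - yi*yj + 2*yj^2) * (yi^2 - (1 - xi^2)) + (1 + xi*xj - 2*xi^2 - yi*yj) * (yj^2 - (1 - xj^2))) by ring.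
  replace (yi^2 - (1 - xi^2)) with 0 in E by lra.
  replace (yj^2 - (1 - xj^2)) with 0 in E by lra. lra.
Qed.

Lemma tri_pair (a b c K k : R) (z w : pt) :
  0 < a -> 0 < b -> -1 < c < 0 -> 2 * K * (a^2 + b^2) = 3 - c^2 -> 2 * K * (a^2 - b^2) = - 2 * c ->
  0 < k -> k * k = K -> unit z -> unit w ->
  Dq z w = 3 - c^2 + 2 * c * Rm z w ->
  0 < Dq z w /\ Defs.dist (Tp a b z) (Tp a b w) = Dq z w / (2 * k) /\
  Qf a b (vsub (Tp a b z) (Tp a b w)) = Dq z w.
Proof.
  intros ha hb hc hK1 hK2 hk hkK uz uw hD.
  destruct z as [x1 y1], w as [x2 y2]. unfold unit, Dq, Rm, Tp, Qf, vsub in *; cbn [fst snd] in *.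
  assert (hR : (x1*x2 - y1*y2)^2 + (x1*y2+y1*x2)^2 = (x1^2+y1^2)*(x2^2+y2^2)) by ring.
  rewrite uz, uw in hR.
  assert (hD0 : 0 < (x1 - x2)^2 + (y1 - y2)^2).
  { rewrite hD. set (m := x1*x2 - y1*y2) in *. set (n := x1*y2+y1*x2) in *.
    assert (m^2 <= 1) by (pose proof (pow2_ge_0 n); lra).
    assert (m <= 1) by nra. nra. }
  split; [auto|]. split.
  - unfold Defs.dist; cbn [fst snd].
    pose proof (diffsq_id x1 y1 x2 y2 uz uw) as hdiff.
    set (D := (x1 - x2)^2 + (y1 - y2)^2) in *.
    assert (hsum : (a * x1 - a * x2)^2 + (b * y1 - b * y2)^2 = (D / (2 * k)) * (D / (2 * k))).
    { assert (S1 : (a * x1 - a * x2)^2 + (b * y1 - b * y2)^2 =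
        ((a^2 + b^2) * D + (a^2 - b^2) * ((x1 - x2)^2 - (y1 - y2)^2)) / 2) by (unfold D; field).
      rewrite S1, hdiff.
      assert (4 * K * (((a^2 + b^2) * D + (a^2 - b^2) * (- D * (x1*x2 - y1*y2))) / 2) = D * D).
      { transitivity (D * (2 * K * (a^2+b^2) - 2 * K * (a^2 - b^2) * (x1*x2 - y1*y2))); [field|].
        rewrite hK1, hK2. rewrite hD at 3. ring. }
      rewrite <- hkK in H. apply (Rmult_eq_reg_l (4 * (k * k))); [|nra].
      rewrite H. field. lra. }
    rewrite hsum. apply sqrt_square. apply Rlt_le, Rdiv_lt_0_compat; lra.
  - field; lra.
Qed.

Lemma area_id (x1 y1 x2 y2 x3 y3 : R) : x1^2+y1^2 = 1 -> x2^2+y2^2 = 1 -> x3^2+y3^2 = 1 ->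
  4 * ((x2-x1)*(y3-y1)-(y2-y1)*(x3-x1))^2 = ((x1-x2)^2+(y1-y2)^2) * ((x2-x3)^2+(y2-y3)^2) * ((x1-x3)^2+(y1-y3)^2).
Proof.
  intros h1 h2 h3.
  assert (E : 4 * ((x2-x1)*(y3-y1)-(y2-y1)*(x3-x1))^2 - ((x1-x2)^2+(y1-y2)^2) * ((x2-x3)^2+(y2-y3)^2) * ((x1-x3)^2+(y1-y3)^2)
    = ((-2) + (-2)*x1*x2*x3^2 + (-4)*x1*x2*y2*y3 + (2)*x1*x2*y2^2 + (2)*x1*x2*y3^2 + (-2)*x1*x2^2*x3 + (2)*x1*x2^3 + (-4)*x1*x3*y2*y3 + (2)*x1*x3*y2^2 + (2)*x1*x3*y3^2 + (2)*x1*x3^3 + (2)*x1^2 + (2)*x1^2*x2*x3 + (-2)*x1^2*x2^2 + (-2)*x1^2*x3^2 + (2)*x1^2*y2*y3 + (-2)*x1^2*y2^2 + (-2)*x1^2*y3^2 + (-6)*x2*x3 + (-4)*x2*x3*y1*y2 + (-4)*x2*x3*y1*y3 + (2)*x2*x3*y1^2 + (8)*x2*x3*y2*y3 + (2)*x2*x3*y2^2 + (2)*x2*x3*y3^2 + (2)*x2*x3^3 + (4)*x2^2 + (-2)*x2^2*x3^2 + (2)*x2^2*y1*y2 + (2)*x2^2*y1*y3 + (-1)*x2^2*y1^2 + (-2)*x2^2*y2*y3 + (-2)*x2^2*y2^2 + (-2)*x2^2*y3^2 + (2)*x2^3*x3 + (-1)*x2^4 + (4)*x3^2 + (2)*x3^2*y1*y2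 + (2)*x3^2*y1*y3 + (-1)*x3^2*y1^2 + (-2)*x3^2*y2*y3 + (-2)*x3^2*y2^2 + (-2)*x3^2*y3^2 + (-1)*x3^4 + (-2)*y1*y2*y3^2 + (-2)*y1*y2^2*y3 + (2)*y1*y2^3 + (2)*y1*y3^3 + (2)*y1^2*y2*y3 + (-1)*y1^2*y2^2 + (-1)*y1^2*y3^2 + (2)*y2*y3 + (-2)*y2*y3^3 + (6)*y2^2*y3^2 + (-2)*y2^3*y3 + (-1)*y2^4 + (-1)*y3^4) * (y1^2 - (1 - x1^2)) + ((-2) + (2)*x1*x2 + (-2)*x1*x2*x3^2 + (-4)*x1*x2*y1*y3 + (2)*x1*x2*y3^2 + (2)*x1*x2^2*x3 + (-4)*x1*x3 + (-4)*x1*x3*y1*y2 + (8)*x1*x3*y1*y3 + (-4)*x1*x3*y2*y3 + (2)*x1*x3*y2^2 + (2)*x1*x3*y3^2 + (2)*x1*x3^3 + (2)*x1^2 + (-4)*x1^2*x2*x3 + (1)*x1^2*y1^2 + (4)*x1^2*y2*y3 + (-8)*x1^2*y3^2 + (1)*x1^4 + (2)*x2*x3 + (-4)*x2*x3*y1*y3 + (2)*x2*x3*y3^2 + (2)*x2*x3^3 + (-2)*x2^2*x3^2 + (2)*x2^2*y1*y3 + (-2)*x2^2*y3^2 + (2)*x3^2 + (2)*x3^2*y1*y2 + (-2)*x3^2*y1*y3 + (2)*x3^2*y2*y3 + (-1)*x3^2*y2^2 + (-2)*x3^2*y3^2 + (-1)*x3^4 + (2)*y1*y2 + (-2)*y1*y2*y3^2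 + (2)*y1*y2^2*y3 + (-2)*y1*y3^3 + (-1)*y1^2 + (-2)*y2*y3 + (2)*y2*y3^3 + (-1)*y2^2 + (-1)*y2^2*y3^2 + (6)*y3^2 + (-1)*y3^4) * (y2^2 - (1 - x2^2)) + ((4) + (-2)*x1*x2 + (2)*x1*x2*x3^2 + (8)*x1*x2*y1*y2 + (-4)*x1*x2*y1*y3 + (-4)*x1*x2*y2*y3 + (2)*x1*x2*y3^2 + (-4)*x1*x2^2*x3 + (4)*x1*x3 + (-4)*x1*x3*y1*y2 + (-6)*x1^2 + (-4)*x1^2*x2*x3 + (8)*x1^2*x2^2 + (1)*x1^2*y1^2 + (4)*x1^2*y2*y3 + (1)*x1^4 + (4)*x2*x3 + (-4)*x2*x3*y1*y2 + (-6)*x2^2 + (4)*x2^2*y1*y3 + (1)*x2^2*y2^2 + (1)*x2^4 + (-2)*x3^2 + (2)*x3^2*y1*y2 + (-2)*y1*y2 + (2)*y1*y2*y3^2 + (-1)*y1^2 + (-1)*y2^2 + (-2)*y3^2) * (y3^2 - (1 - x3^2))) by ring.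
  replace (y1^2 - (1 - x1^2)) with 0 in E by lra.
  replace (y2^2 - (1 - x2^2)) with 0 in E by lra.
  replace (y3^2 - (1 - x3^2)) with 0 in E by lra. lra.
Qed.

Lemma Dq_sym z w : Dq z w = Dq w z.
Proof. unfold Dq. ring. Qed.
Lemma Rm_sym z w : Rm z w = Rm w z.
Proof. unfold Rm. ring. Qed.

Lemma tri_periodic (a b c K k : R) (z1 z2 z3 : pt) :
  0 < a -> 0 < b -> -1 < c < 0 -> 2 * K * (a^2 + b^2) = 3 - c^2 -> 2 * K * (a^2 - b^2) = - 2 * c ->
  0 < k -> k * k = K -> unit z1 -> unit z2 -> unit z3 ->
  Rm z1 z2 + Rm z2 z3 + Rm z3 z1 = c ->
  (fst z1 * snd z2 + snd z1 * fst z2) + (fst z2 * snd z3 + snd z2 * fst z3) + (fst z3 * snd z1 + snd z3 * fst z1) = 0 ->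
  periodic3 a b (Tp a b z1) (Tp a b z2) (Tp a b z3) /\
  Defs.dist (Tp a b z2) (Tp a b z3) = Dq z2 z3 / (2 * k) /\
  Defs.dist (Tp a b z3) (Tp a b z1) = Dq z3 z1 / (2 * k) /\
  Defs.dist (Tp a b z1) (Tp a b z2) = Dq z1 z2 / (2 * k).
Proof.
  intros ha hb hc hK1 hK2 hk hkK u1 u2 u3 hre him.
  assert (c12 : Dq z1 z2 = 3 - c^2 + 2 * c * Rm z1 z2).
  { destruct z1 as [x1 y1], z2 as [x2 y2], z3 as [x3 y3]; unfold unit, Dq, Rm in *; cbn [fst snd] in *.
    apply (chord c x1 y1 x2 y2 x3 y3); auto. }
  assert (c23 : Dq z2 z3 = 3 - c^2 + 2 * c * Rm z2 z3).
  { destruct z1 as [x1 y1], z2 as [x2 y2], z3 as [x3 y3]; unfold unit, Dq, Rm in *; cbn [fst snd] in *.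
    apply (chord c x2 y2 x3 y3 x1 y1); auto; lra. }
  assert (c31 : Dq z3 z1 = 3 - c^2 + 2 * c * Rm z3 z1).
  { destruct z1 as [x1 y1], z2 as [x2 y2], z3 as [x3 y3]; unfold unit, Dq, Rm in *; cbn [fst snd] in *.
    apply (chord c x3 y3 x1 y1 x2 y2); auto; lra. }
  assert (c21 : Dq z2 z1 = 3 - c^2 + 2 * c * Rm z2 z1) by (rewrite Dq_sym, Rm_sym; auto).
  assert (c32 : Dq z3 z2 = 3 - c^2 + 2 * c * Rm z3 z2) by (rewrite Dq_sym, Rm_sym; auto).
  assert (c13 : Dq z1 z3 = 3 - c^2 + 2 * c * Rm z1 z3) by (rewrite Dq_sym, Rm_sym; auto).
  destruct (tri_pair a b c K k z1 z2 ha hb hc hK1 hK2 hk hkK u1 u2 c12) as [p12 [d12 q12]].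
  destruct (tri_pair a b c K k z2 z3 ha hb hc hK1 hK2 hk hkK u2 u3 c23) as [p23 [d23 q23]].
  destruct (tri_pair a b c K k z3 z1 ha hb hc hK1 hK2 hk hkK u3 u1 c31) as [p31 [d31 q31]].
  destruct (tri_pair a b c K k z2 z1 ha hb hc hK1 hK2 hk hkK u2 u1 c21) as [p21 [d21 q21]].
  destruct (tri_pair a b c K k z3 z2 ha hb hc hK1 hK2 hk hkK u3 u2 c32) as [p32 [d32 q32]].
  destruct (tri_pair a b c K k z1 z3 ha hb hc hK1 hK2 hk hkK u1 u3 c13) as [p13 [d13 q13]].
  assert (ell : forall z, unit z -> on_ellipse a b (Tp a b z)).
  { intros [x y] hu. unfold unit, on_ellipse, Tp in *; cbn [fst snd] in *. rewrite <- hu. field; lra. }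
  assert (hnd : nondegenerate (Tp a b z1) (Tp a b z2) (Tp a b z3)).
  { destruct z1 as [x1 y1], z2 as [x2 y2], z3 as [x3 y3].
    unfold nondegenerate, unit, Dq, Tp, cross, vsub in *; cbn [fst snd] in *.
    pose proof (area_id x1 y1 x2 y2 x3 y3 u1 u2 u3) as ar.
    assert (p13' : 0 < (x1 - x3)^2 + (y1 - y3)^2) by nra.
    intro h.
    assert (((x2-x1)*(y3-y1)-(y2-y1)*(x3-x1)) = 0).
    { replace ((a * x2 - a * x1) * (b * y3 - b * y1) - (b * y2 - b * y1) * (a * x3 - a * x1))
        with (a * b * ((x2-x1)*(y3-y1)-(y2-y1)*(x3-x1))) in h by ring.
      apply Rmult_integral in h. destruct h as [h|h]; auto. exfalso. nra. }
    rewrite H in ar.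
    assert (0 < ((x1 - x2) ^ 2 + (y1 - y2) ^ 2) * ((x2 - x3) ^ 2 + (y2 - y3) ^ 2) * ((x1 - x3)^2 + (y1 - y3)^2))
      by (apply Rmult_lt_0_compat; auto; apply Rmult_lt_0_compat; auto).
    lra. }
  split; [|auto].
  unfold periodic3. split; [auto|]. split; [apply ell; auto|]. split; [apply ell; auto|].
  split; [apply ell; auto|].
  split; [|split].
  - apply vertex_from_ratio; try lra; try (apply ell; auto); auto.
    rewrite q21, q31, d31, d21. field. lra.
  - apply vertex_from_ratio; try lra; try (apply ell; auto); auto.
    + apply nondeg_rot; auto.
    + rewrite q32, q12, d12, d32. field. lra.
  - apply vertex_from_ratio; try lra; try (apply ell; auto); auto.
    + apply nondeg_rot, nondeg_rot; auto.
    + rewrite q13, q23, d23, d13. field. lra.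
Qed.

Definition lam1 (al be ga : R) (D1 D2 D3 : R) := al * D1 + be * D2 + ga * D3.
Definition wts (al be ga : R) (z1 z2 z3 : pt) : R * R * R :=
  let D1 := Dq z2 z3 in let D2 := Dq z3 z1 in let D3 := Dq z1 z2 in
  let l1 := lam1 al be ga D1 D2 D3 in let l2 := lam1 al be ga D2 D3 D1 in let l3 := lam1 al be ga D3 D1 D2 in
  (D1 * l2 * l3, D2 * l3 * l1, D3 * l1 * l2).
Definition Wsum (al be ga : R) (z1 z2 z3 : pt) : R :=
  let '(w1, w2, w3) := wts al be ga z1 z2 z3 in w1 + w2 + w3.
Definition zhom (al be ga : R) (z1 z2 z3 : pt) : pt :=
  let '(w1, w2, w3) := wts al be ga z1 z2 z3 in
  (w1 * fst z1 + w2 * fst z2 + w3 * fst z3, w1 * snd z1 + w2 * snd z2 + w3 * snd z3).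

Lemma zhom_norm (al be ga : R) z1 z2 z3 : al + be + ga = 0 -> unit z1 -> unit z2 -> unit z3 ->
  fst (zhom al be ga z1 z2 z3) ^ 2 + snd (zhom al be ga z1 z2 z3) ^ 2 = (Wsum al be ga z1 z2 z3) ^ 2.
Proof.
  intros hs u1 u2 u3. unfold zhom, Wsum, wts, lam1.
  destruct z1 as [x1 y1], z2 as [x2 y2], z3 as [x3 y3]; unfold unit, Dq in *; cbn [fst snd] in *.
  set (D1 := (x2 - x3) ^ 2 + (y2 - y3) ^ 2). set (D2 := (x3 - x1) ^ 2 + (y3 - y1) ^ 2).
  set (D3 := (x1 - x2) ^ 2 + (y1 - y2) ^ 2).
  set (w1 := D1 * (al * D2 + be * D3 + ga * D1) * (al * D3 + be * D1 + ga * D2)).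
  set (w2 := D2 * (al * D3 + be * D1 + ga * D2) * (al * D1 + be * D2 + ga * D3)).
  set (w3 := D3 * (al * D1 + be * D2 + ga * D3) * (al * D2 + be * D3 + ga * D1)).
  assert (E : (w1 * x1 + w2 * x2 + w3 * x3) ^ 2 + (w1 * y1 + w2 * y2 + w3 * y3) ^ 2
     = w1^2 * (x1^2+y1^2) + w2^2 * (x2^2+y2^2) + w3^2 * (x3^2+y3^2)
       + w1 * w2 * ((x1^2+y1^2) + (x2^2+y2^2) - D3) + w2 * w3 * ((x2^2+y2^2) + (x3^2+y3^2) - D1)
       + w1 * w3 * ((x1^2+y1^2) + (x3^2+y3^2) - D2)) by (unfold D1, D2, D3; ring).
  rewrite E, u1, u2, u3.
  assert (Z : w1 * w2 * D3 + w2 * w3 * D1 + w1 * w3 * D2 = 0).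
  { unfold w1, w2, w3. replace ga with (- al - be) by lra. ring. }
  transitivity ((w1 + w2 + w3) ^ 2 - (w1 * w2 * D3 + w2 * w3 * D1 + w1 * w3 * D2)); [ring|].
  rewrite Z. ring.
Qed.

Lemma W_zero (al be ga : R) z1 z2 z3 : al + be + ga = 0 -> unit z1 -> unit z2 -> unit z3 ->
  0 < Dq z2 z3 -> 0 < Dq z3 z1 -> 0 < Dq z1 z2 ->
  Wsum al be ga z1 z2 z3 = 0 ->
  let D1 := Dq z2 z3 in let D2 := Dq z3 z1 in let D3 := Dq z1 z2 in
  (lam1 al be ga D2 D3 D1 = 0 \/ lam1 al be ga D3 D1 D2 = 0) /\
  (lam1 al be ga D3 D1 D2 = 0 \/ lam1 al be ga D1 D2 D3 = 0) /\
  (lam1 al be ga D1 D2 D3 = 0 \/ lam1 al be ga D2 D3 D1 = 0).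
Proof.
  intros hs u1 u2 u3 p1 p2 p3 hW.
  pose proof (zhom_norm al be ga z1 z2 z3 hs u1 u2 u3) as hn.
  rewrite hW in hn.
  revert hW hn. unfold zhom, Wsum, wts.
  destruct z1 as [x1 y1], z2 as [x2 y2], z3 as [x3 y3]; unfold unit, Dq in *; cbn [fst snd] in *.
  set (D1 := (x2 - x3) ^ 2 + (y2 - y3) ^ 2) in *. set (D2 := (x3 - x1) ^ 2 + (y3 - y1) ^ 2) in *.
  set (D3 := (x1 - x2) ^ 2 + (y1 - y2) ^ 2) in *.
  set (l1 := lam1 al be ga D1 D2 D3). set (l2 := lam1 al be ga D2 D3 D1). set (l3 := lam1 al be ga D3 D1 D2).
  intros hW hn.
  set (w1 := D1 * l2 * l3) in *. set (w2 := D2 * l3 * l1) in *. set (w3 := D3 * l1 * l2) in *.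
  destruct (sumsq0 (w1 * x1 + w2 * x2 + w3 * x3) (w1 * y1 + w2 * y2 + w3 * y3)) as [hx hy]; [lra|].
  pose proof (area_id x1 y1 x2 y2 x3 y3 u1 u2 u3) as ar.
  set (cr := (x2-x1)*(y3-y1)-(y2-y1)*(x3-x1)) in *.
  assert (hcr : cr <> 0).
  { intro h. rewrite h in ar.
    assert (0 < D3 * D1 * ((x1 - x3)^2 + (y1 - y3)^2)).
    { apply Rmult_lt_0_compat; [apply Rmult_lt_0_compat; auto|]. unfold D2 in p2. nra. }
    unfold D1, D3 in H. lra. }
  assert (e1 : w1 * cr = 0).
  { replace (w1 * cr) with (- ((w1 * x1 + w2 * x2 + w3 * x3) * (y3 - y2) - (w1 * y1 + w2 * y2 + w3 * y3) * (x3 - x2)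
       + (w1 + w2 + w3) * (x3 * y2 - x2 * y3))) by (unfold cr; ring).
    rewrite hx, hy, hW. ring. }
  assert (e2 : w2 * cr = 0).
  { replace (w2 * cr) with (- ((w1 * x1 + w2 * x2 + w3 * x3) * (y1 - y3) - (w1 * y1 + w2 * y2 + w3 * y3) * (x1 - x3)
       + (w1 + w2 + w3) * (x1 * y3 - x3 * y1))) by (unfold cr; ring).
    rewrite hx, hy, hW. ring. }
  assert (e3 : w3 * cr = 0).
  { replace (w3 * cr) with (- ((w1 * x1 + w2 * x2 + w3 * x3) * (y2 - y1) - (w1 * y1 + w2 * y2 + w3 * y3) * (x2 - x1)
       + (w1 + w2 + w3) * (x2 * y1 - x1 * y2))) by (unfold cr; ring).
    rewrite hx, hy, hW. ring. }
  apply Rmult_integral in e1, e2, e3.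
  destruct e1 as [e1|e1]; [|contradiction]. destruct e2 as [e2|e2]; [|contradiction].
  destruct e3 as [e3|e3]; [|contradiction].
  unfold w1, w2, w3 in *.
  apply Rmult_integral in e1, e2, e3.
  destruct e1 as [e1|e1]; [apply Rmult_integral in e1; destruct e1 as [e1|e1]; [lra|]|];
  destruct e2 as [e2|e2]; try (apply Rmult_integral in e2; destruct e2 as [e2|e2]; [lra|]);
  destruct e3 as [e3|e3]; try (apply Rmult_integral in e3; destruct e3 as [e3|e3]; [lra|]);
  fold l1 l2 l3; tauto.
Qed.

Lemma center_tri (a b c K k al be ga : R) (z1 z2 z3 : pt) :
  al + be + ga = 0 ->
  0 < a -> 0 < b -> -1 < c < 0 -> 2 * K * (a^2 + b^2) = 3 - c^2 -> 2 * K * (a^2 - b^2) = - 2 * c ->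
  0 < k -> k * k = K -> unit z1 -> unit z2 -> unit z3 ->
  Rm z1 z2 + Rm z2 z3 + Rm z3 z1 = c ->
  (fst z1 * snd z2 + snd z1 * fst z2) + (fst z2 * snd z3 + snd z2 * fst z3) + (fst z3 * snd z1 + snd z3 * fst z1) = 0 ->
  lam1 al be ga (Dq z2 z3) (Dq z3 z1) (Dq z1 z2) <> 0 ->
  lam1 al be ga (Dq z3 z1) (Dq z1 z2) (Dq z2 z3) <> 0 ->
  lam1 al be ga (Dq z1 z2) (Dq z2 z3) (Dq z3 z1) <> 0 ->
  Wsum al be ga z1 z2 z3 <> 0 /\
  center (hL al be ga) (Tp a b z1) (Tp a b z2) (Tp a b z3) =
    Some (Tp a b (fst (zhom al be ga z1 z2 z3) / Wsum al be ga z1 z2 z3,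
                  snd (zhom al be ga z1 z2 z3) / Wsum al be ga z1 z2 z3)).
Proof.
  intros hs ha hb hc hK1 hK2 hk hkK u1 u2 u3 hre him l1 l2 l3.
  destruct (tri_periodic a b c K k z1 z2 z3 ha hb hc hK1 hK2 hk hkK u1 u2 u3 hre him) as [hp [d1 [d2 d3]]].
  destruct hp as [hnd _].
  pose proof (nondeg_pos _ _ _ hnd) as p3.
  pose proof (nondeg_pos _ _ _ (nondeg_rot _ _ _ hnd)) as p1.
  pose proof (nondeg_pos _ _ _ (nondeg_rot _ _ _ (nondeg_rot _ _ _ hnd))) as p2.
  rewrite d1 in p1. rewrite d2 in p2. rewrite d3 in p3.
  assert (q1 : 0 < Dq z2 z3) by (apply (Rmult_lt_reg_r (/(2*k))); [apply Rinv_0_lt_compat; lra| rewrite Rmult_0_l; exact p1]).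
  assert (q2 : 0 < Dq z3 z1) by (apply (Rmult_lt_reg_r (/(2*k))); [apply Rinv_0_lt_compat; lra| rewrite Rmult_0_l; exact p2]).
  assert (q3 : 0 < Dq z1 z2) by (apply (Rmult_lt_reg_r (/(2*k))); [apply Rinv_0_lt_compat; lra| rewrite Rmult_0_l; exact p3]).
  assert (hW : Wsum al be ga z1 z2 z3 <> 0).
  { intro hW. destruct (W_zero al be ga z1 z2 z3 hs u1 u2 u3 q1 q2 q3 hW) as [[h|h] _]; contradiction. }
  split; [auto|].
  unfold center. cbv zeta. rewrite d1, d2, d3.
  revert hW l1 l2 l3 q1 q2 q3. unfold Wsum, zhom, wts, hL, lam1.
  set (D1 := Dq z2 z3). set (D2 := Dq z3 z1). set (D3 := Dq z1 z2).
  intros hW l1 l2 l3 q1 q2 q3.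
  assert (E1 : al * (D1 / (2 * k)) + be * (D2 / (2 * k)) + ga * (D3 / (2 * k)) = (al * D1 + be * D2 + ga * D3) / (2 * k)) by (field; lra).
  assert (E2 : al * (D2 / (2 * k)) + be * (D3 / (2 * k)) + ga * (D1 / (2 * k)) = (al * D2 + be * D3 + ga * D1) / (2 * k)) by (field; lra).
  assert (E3 : al * (D3 / (2 * k)) + be * (D1 / (2 * k)) + ga * (D2 / (2 * k)) = (al * D3 + be * D1 + ga * D2) / (2 * k)) by (field; lra).
  rewrite E1, E2, E3.
  destruct (Req_EM_T ((al * D1 + be * D2 + ga * D3) / (2 * k)) 0) as [e|_].
  { exfalso. apply l1. apply (Rmult_eq_reg_r (/ (2 * k))); [rewrite Rmult_0_l; exact e| apply Rinv_neq_0_compat; lra]. }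
  destruct (Req_EM_T ((al * D2 + be * D3 + ga * D1) / (2 * k)) 0) as [e|_].
  { exfalso. apply l2. apply (Rmult_eq_reg_r (/ (2 * k))); [rewrite Rmult_0_l; exact e| apply Rinv_neq_0_compat; lra]. }
  destruct (Req_EM_T ((al * D3 + be * D1 + ga * D2) / (2 * k)) 0) as [e|_].
  { exfalso. apply l3. apply (Rmult_eq_reg_r (/ (2 * k))); [rewrite Rmult_0_l; exact e| apply Rinv_neq_0_compat; lra]. }
  set (L1 := al * D1 + be * D2 + ga * D3) in *. set (L2 := al * D2 + be * D3 + ga * D1) in *.
  set (L3 := al * D3 + be * D1 + ga * D2) in *.
  assert (Ed : / (L1 / (2 * k)) * (D1 / (2 * k)) + / (L2 / (2 * k)) * (D2 / (2 * k)) + / (L3 / (2 * k)) * (D3 / (2 * k))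
     = (D1 * L2 * L3 + D2 * L3 * L1 + D3 * L1 * L2) / (L1 * L2 * L3)) by (field; repeat split; lra).
  rewrite Ed.
  destruct (Req_EM_T ((D1 * L2 * L3 + D2 * L3 * L1 + D3 * L1 * L2) / (L1 * L2 * L3)) 0) as [e|_].
  { exfalso. apply hW. unfold Rdiv in e. apply Rmult_integral in e. destruct e as [e|e]; auto.
    exfalso. revert e. apply Rinv_neq_0_compat. repeat apply Rmult_integral_contrapositive; auto. }
  unfold Tp. destruct z1 as [x1 y1], z2 as [x2 y2], z3 as [x3 y3]; cbn [fst snd].
  f_equal. f_equal; field; repeat split; auto; lra.
Qed.

Definition kf (c C S : R) := sqrt (1 + c^2 - 2 * c * (C^2 - S^2)).
Definition sf (c C S : R) := sqrt (3 - c^2 + 2 * c * (C^2 - S^2)).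
Definition Z1 (c C S : R) : pt := ((c - 1) * C / kf c C S, - (c + 1) * S / kf c C S).
Definition Z2 (c C S : R) : pt := ((C * kf c C S - S * sf c C S) / 2, (S * kf c C S + C * sf c C S) / 2).
Definition Z3 (c C S : R) : pt := ((C * kf c C S + S * sf c C S) / 2, (S * kf c C S - C * sf c C S) / 2).

Lemma u_bound (C S : R) : C^2 + S^2 = 1 -> -1 <= C^2 - S^2 <= 1.
Proof. intros h. split; nra. Qed.

Lemma kf_props (c C S : R) : -1 < c < 0 -> C^2 + S^2 = 1 ->
  0 < kf c C S /\ kf c C S * kf c C S = 1 + c^2 - 2 * c * (C^2 - S^2) /\
  0 < sf c C S /\ sf c C S * sf c C S = 3 - c^2 + 2 * c * (C^2 - S^2).
Proof.
  intros hc h. pose proof (u_bound C S h) as hu.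
  assert (p1 : 0 < 1 + c^2 - 2 * c * (C^2 - S^2)) by nra.
  assert (p2 : 0 < 3 - c^2 + 2 * c * (C^2 - S^2)) by nra.
  unfold kf, sf. repeat split.
  - apply sqrt_lt_R0; auto.
  - apply sqrt_sqrt; lra.
  - apply sqrt_lt_R0; auto.
  - apply sqrt_sqrt; lra.
Qed.

Lemma constr_basic (c C S : R) : -1 < c < 0 -> C^2 + S^2 = 1 ->
  let z1 := Z1 c C S in let z2 := Z2 c C S in let z3 := Z3 c C S in
  unit z1 /\ unit z2 /\ unit z3 /\
  Rm z1 z2 + Rm z2 z3 + Rm z3 z1 = c /\
  (fst z1 * snd z2 + snd z1 * fst z2) + (fst z2 * snd z3 + snd z2 * fst z3) + (fst z3 * snd z1 + snd z3 * fst z1) = 0.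
Proof.
  intros hc h z1 z2 z3.
  destruct (kf_props c C S hc h) as [kp [kk [sp ss]]].
  unfold z1, z2, z3, Z1, Z2, Z3, unit, Rm, Dq; cbn [fst snd].
  set (k := kf c C S) in *. set (s := sf c C S) in *.
  assert (kn : k <> 0) by lra.
  assert (hks : k * k + s * s = 4) by lra.
  split.
  { transitivity (((c-1)^2 * C^2 + (c+1)^2 * S^2) / (k * k)); [field; auto|].
    assert (N : (c-1)^2 * C^2 + (c+1)^2 * S^2 = k * k).
    { rewrite kk. assert (E : (c-1)^2 * C^2 + (c+1)^2 * S^2 - (1 + c^2 - 2 * c * (C^2 - S^2)) = (c^2+1) * (C^2 + S^2 - 1)) by ring.
      rewrite h in E. lra. }
    rewrite N. field. auto. }
  split.
  { transitivity ((C^2 + S^2) * (k * k + s * s) / 4); [field|]. rewrite h, hks. field. }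
  split.
  { transitivity ((C^2 + S^2) * (k * k + s * s) / 4); [field|]. rewrite h, hks. field. }
  split.
  { transitivity (c * (C^2 + S^2) + (C^2 - S^2) * ((k * k + s * s) / 4 - 1)); [field; auto|].
    rewrite h, hks. field. }
  { transitivity (2 * C * S * ((k * k + s * s) / 4 - 1)); [field; auto|].
    rewrite hks. field. }
Qed.

Lemma constr_D (c C S : R) : -1 < c < 0 -> C^2 + S^2 = 1 ->
  let z1 := Z1 c C S in let z2 := Z2 c C S in let z3 := Z3 c C S in
  Dq z2 z3 = 3 - c^2 + 2 * c * (C^2 - S^2) /\
  Dq z3 z1 = 3 - c * (C^2 - S^2) - c * (sf c C S / kf c C S * (2 * C * S)) /\
  Dq z1 z2 = 3 - c * (C^2 - S^2) + c * (sf c C S / kf c C S * (2 * C * S)).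
Proof.
  intros hc h z1 z2 z3.
  destruct (constr_basic c C S hc h) as [u1 [u2 [u3 [hre him]]]]. fold z1 z2 z3 in u1, u2, u3, hre, him.
  destruct (kf_props c C S hc h) as [kp [kk [sp ss]]].
  assert (c31 : Dq z3 z1 = 3 - c^2 + 2 * c * Rm z3 z1).
  { destruct z1 as [x1 y1] eqn:E1, z2 as [x2 y2] eqn:E2, z3 as [x3 y3] eqn:E3; unfold unit, Dq, Rm in *; cbn [fst snd] in *.
    apply (chord c x3 y3 x1 y1 x2 y2); auto; lra. }
  assert (c12 : Dq z1 z2 = 3 - c^2 + 2 * c * Rm z1 z2).
  { destruct z1 as [x1 y1] eqn:E1, z2 as [x2 y2] eqn:E2, z3 as [x3 y3] eqn:E3; unfold unit, Dq, Rm in *; cbn [fst snd] in *.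
    apply (chord c x1 y1 x2 y2 x3 y3); auto; lra. }
  rewrite c31, c12.
  unfold z1, z2, z3, Z1, Z2, Z3, Rm, Dq; cbn [fst snd].
  set (k := kf c C S) in *. set (s := sf c C S) in *.
  assert (kn : k <> 0) by lra.
  split; [|split].
  - transitivity ((C^2 + S^2) * (s * s)); [field|]. rewrite h, ss. ring.
  - transitivity (3 - c^2 + c * (c * (C^2 + S^2) - (C^2 - S^2)) - c * (s / k * (2 * C * S))); [field; auto|].
    rewrite h. ring.
  - transitivity (3 - c^2 + c * (c * (C^2 + S^2) - (C^2 - S^2)) + c * (s / k * (2 * C * S))); [field; auto|].
    rewrite h. ring.
Qed.

Lemma cubic4 (A B C D x1 x2 x3 x4 : R) :
  x1 <> x2 -> x1 <> x3 -> x1 <> x4 -> x2 <> x3 -> x2 <> x4 -> x3 <> x4 ->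
  A * x1^3 + B * x1^2 + C * x1 + D = 0 ->
  A * x2^3 + B * x2^2 + C * x2 + D = 0 ->
  A * x3^3 + B * x3^2 + C * x3 + D = 0 ->
  A * x4^3 + B * x4^2 + C * x4 + D = 0 ->
  A = 0 /\ B = 0.
Proof.
  intros d12 d13 d14 d23 d24 d34 h1 h2 h3 h4.
  assert (n12 : x1 - x2 <> 0) by lra. assert (n13 : x1 - x3 <> 0) by lra. assert (n14 : x1 - x4 <> 0) by lra.
  assert (n23 : x2 - x3 <> 0) by lra. assert (n24 : x2 - x4 <> 0) by lra. assert (n34 : x3 - x4 <> 0) by lra.
  assert (HA : A = (A * x1^3 + B * x1^2 + C * x1 + D) / ((x1 - x2) * (x1 - x3) * (x1 - x4))
                 + (A * x2^3 + B * x2^2 + C * x2 + D) / ((x2 - x1) * (x2 - x3) * (x2 - x4))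
                 + (A * x3^3 + B * x3^2 + C * x3 + D) / ((x3 - x1) * (x3 - x2) * (x3 - x4))
                 + (A * x4^3 + B * x4^2 + C * x4 + D) / ((x4 - x1) * (x4 - x2) * (x4 - x3))).
  { field. repeat split; lra. }
  rewrite h1, h2, h3, h4 in HA.
  assert (A0 : A = 0) by (rewrite HA; field; repeat split; lra).
  split; auto.
  assert (HB : B = (A * x1^3 + B * x1^2 + C * x1 + D) / ((x1 - x2) * (x1 - x3))
                 + (A * x2^3 + B * x2^2 + C * x2 + D) / ((x2 - x1) * (x2 - x3))
                 + (A * x3^3 + B * x3^2 + C * x3 + D) / ((x3 - x1) * (x3 - x2))).
  { rewrite A0. field. repeat split; lra. }
  rewrite h1, h2, h3 in HB. rewrite HB. field. repeat split; lra.
Qed.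

Definition Pe (c e d u : R) := e^2 * (3 * u - c)^2 * (1 + c^2 - 2 * c * u) - d^2 * (3 - c^2 + 2 * c * u) * (1 - u^2).

Lemma Pe_coeffs c e d u : Pe c e d u =
  (2 * c * (d^2 - 9 * e^2)) * u^3 + (e^2 * (9 + 21 * c^2) + d^2 * (3 - c^2)) * u^2
  + (e^2 * (-6 * c - 8 * c^3) - 2 * c * d^2) * u + (e^2 * c^2 * (1 + c^2) - d^2 * (3 - c^2)).
Proof. unfold Pe. ring. Qed.

Lemma g_zero_Pe (c e d u v k s : R) :
  k <> 0 -> k * k = 1 + c^2 - 2 * c * u -> s * s = 3 - c^2 + 2 * c * u -> u^2 + v^2 = 1 ->
  - e * c + 3 * e * u + d * (s / k * v) = 0 -> Pe c e d u = 0.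
Proof.
  intros kn hk hs huv hg.
  assert (h1 : e * (3 * u - c) * k = - d * s * v).
  { apply (Rmult_eq_reg_r (/ k)); [|apply Rinv_neq_0_compat; auto].
    transitivity (- e * c + 3 * e * u); [field; auto|].
    transitivity (- (d * (s / k * v))); [lra| field; auto]. }
  assert (h2 : (e * (3 * u - c) * k)^2 = (- d * s * v)^2) by (rewrite h1; reflexivity).
  unfold Pe.
  replace ((e * (3 * u - c) * k)^2) with (e^2 * (3 * u - c)^2 * (k * k)) in h2 by ring.
  replace ((- d * s * v)^2) with (d^2 * (s * s) * v^2) in h2 by ring.
  rewrite hk, hs in h2. replace (v^2) with (1 - u^2) in h2 by lra. lra.
Qed.

Lemma ed_zero (c e d x1 x2 x3 x4 : R) : -1 < c < 0 ->
  x1 <> x2 -> x1 <> x3 -> x1 <> x4 -> x2 <> x3 -> x2 <> x4 -> x3 <> x4 ->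
  Pe c e d x1 = 0 -> Pe c e d x2 = 0 -> Pe c e d x3 = 0 -> Pe c e d x4 = 0 -> e = 0 /\ d = 0.
Proof.
  intros hc d12 d13 d14 d23 d24 d34 h1 h2 h3 h4.
  rewrite Pe_coeffs in h1, h2, h3, h4.
  destruct (cubic4 _ _ _ _ x1 x2 x3 x4 d12 d13 d14 d23 d24 d34 h1 h2 h3 h4) as [hA hB].
  assert (hd : d^2 = 9 * e^2).
  { apply Rmult_integral in hA. destruct hA as [hA|hA]; [|lra]. apply Rmult_integral in hA. destruct hA; lra. }
  rewrite hd in hB.
  assert (e^2 = 0) by nra.
  assert (e = 0) by nra. split; auto. rewrite H in hd. nra.
Qed.

Lemma cplus (f g : R -> R) : continuity f -> continuity g -> continuity (fun x => f x + g x).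
Proof. intros; apply (continuity_plus f g); auto. Qed.
Lemma cminus (f g : R -> R) : continuity f -> continuity g -> continuity (fun x => f x - g x).
Proof. intros; apply (continuity_minus f g); auto. Qed.
Lemma cmult (f g : R -> R) : continuity f -> continuity g -> continuity (fun x => f x * g x).
Proof. intros; apply (continuity_mult f g); auto. Qed.
Lemma copp (f : R -> R) : continuity f -> continuity (fun x => - f x).
Proof. intros; apply (continuity_opp f); auto. Qed.
Lemma cconst (c : R) : continuity (fun _ => c).
Proof. apply continuity_const. intros x y. reflexivity. Qed.
Lemma cpow (f : R -> R) (n : nat) : continuity f -> continuity (fun x => f x ^ n).
Proof. intros hf. induction n as [|n IH].
  - simpl. apply cconst.
  - simpl. apply (cmult f (fun x => f x ^ n)); auto. Qed.
Lemma cdiv (f g : R -> R) : continuity f -> continuity g -> (forall x, g x <> 0) -> continuity (fun x => f x / g x).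
Proof. intros; apply (continuity_div f g); auto. Qed.
Lemma cinv (f : R -> R) : continuity f -> (forall x, f x <> 0) -> continuity (fun x => / f x).
Proof. intros; apply (continuity_inv f); auto. Qed.
Lemma ccos : continuity (fun x => cos x).
Proof. exact continuity_cos. Qed.
Lemma csin : continuity (fun x => sin x).
Proof. exact continuity_sin. Qed.

Lemma csqrt_pos (f : R -> R) : continuity f -> (forall x, 0 < f x) -> continuity (fun x => sqrt (f x)).
Proof.
  intros hf hp x. apply (continuity_pt_comp f sqrt x (hf x)). apply continuity_pt_sqrt. left; auto.
Qed.

Lemma cos2sin2 x : cos x ^ 2 + sin x ^ 2 = 1.
Proof. rewrite <- (sin2_cos2 x). unfold Rsqr. ring. Qed.

Lemma ckf (c : R) : -1 < c < 0 -> continuity (fun x => kf c (cos x) (sin x)).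
Proof.
  intros hc. unfold kf. apply csqrt_pos.
  - repeat first [apply cminus | apply cplus | apply copp | apply cmult | apply cpow | apply ccos | apply csin | apply cconst].
  - intros x. pose proof (u_bound _ _ (cos2sin2 x)). nra.
Qed.

Lemma csf (c : R) : -1 < c < 0 -> continuity (fun x => sf c (cos x) (sin x)).
Proof.
  intros hc. unfold sf. apply csqrt_pos.
  - repeat first [apply cminus | apply cplus | apply copp | apply cmult | apply cpow | apply ccos | apply csin | apply cconst].
  - intros x. pose proof (u_bound _ _ (cos2sin2 x)). nra.
Qed.

Lemma kf_nz (c : R) : -1 < c < 0 -> forall x, kf c (cos x) (sin x) <> 0.
Proof. intros hc x. destruct (kf_props c (cos x) (sin x) hc (cos2sin2 x)) as [h _]. lra. Qed.

Ltac cont c hc := repeat first [ apply (ckf c hc) | apply (csf c hc) | apply ccos | apply csin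
   | (apply cdiv; [ | | apply (kf_nz c hc)])
   | (apply cdiv; [ | | intros; lra])
   | (apply cinv; [ | apply (kf_nz c hc)])
   | apply cminus | apply cplus | apply cmult | apply copp | apply cpow
   | apply cconst ].

Definition zt1 (c : R) (x : R) := Z1 c (cos x) (sin x).
Definition zt2 (c : R) (x : R) := Z2 c (cos x) (sin x).
Definition zt3 (c : R) (x : R) := Z3 c (cos x) (sin x).

Lemma czt (c : R) : -1 < c < 0 ->
  continuity (fun x => fst (zt1 c x)) /\ continuity (fun x => snd (zt1 c x)) /\
  continuity (fun x => fst (zt2 c x)) /\ continuity (fun x => snd (zt2 c x)) /\
  continuity (fun x => fst (zt3 c x)) /\ continuity (fun x => snd (zt3 c x)).
Proof.
  intros hc. unfold zt1, zt2, zt3, Z1, Z2, Z3; cbn [fst snd].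
  repeat split; cont c hc.
Qed.

Definition zh (al be ga c x : R) := zhom al be ga (zt1 c x) (zt2 c x) (zt3 c x).
Definition Wt (al be ga c x : R) := Wsum al be ga (zt1 c x) (zt2 c x) (zt3 c x).
Definition Lt1 (al be ga c x : R) := lam1 al be ga (Dq (zt2 c x) (zt3 c x)) (Dq (zt3 c x) (zt1 c x)) (Dq (zt1 c x) (zt2 c x)).
Definition Lt2 (al be ga c x : R) := lam1 al be ga (Dq (zt3 c x) (zt1 c x)) (Dq (zt1 c x) (zt2 c x)) (Dq (zt2 c x) (zt3 c x)).
Definition Lt3 (al be ga c x : R) := lam1 al be ga (Dq (zt1 c x) (zt2 c x)) (Dq (zt2 c x) (zt3 c x)) (Dq (zt3 c x) (zt1 c x)).

Ltac cont2 h1 h2 h3 h4 h5 h6 := repeat first [ apply h1 | apply h2 | apply h3 | apply h4 | apply h5 | apply h6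
   | apply cminus | apply cplus | apply cmult | apply copp | apply cpow | apply cconst ].

Lemma cont_all (al be ga c : R) : -1 < c < 0 ->
  continuity (fun x => fst (zh al be ga c x)) /\ continuity (fun x => snd (zh al be ga c x)) /\
  continuity (Wt al be ga c) /\ continuity (Lt1 al be ga c) /\ continuity (Lt2 al be ga c) /\
  continuity (Lt3 al be ga c).
Proof.
  intros hc. destruct (czt c hc) as [h1 [h2 [h3 [h4 [h5 h6]]]]].
  unfold zh, Wt, Lt1, Lt2, Lt3.
  cbv beta iota zeta delta [zhom Wsum wts lam1 Dq]. cbn [fst snd].
  repeat split; cont2 h1 h2 h3 h4 h5 h6.
Qed.

Definition negp (z : pt) : pt := (- fst z, - snd z).

Lemma kf_neg c C S : kf c (- C) (- S) = kf c C S.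
Proof. unfold kf. replace ((- C)^2 - (- S)^2) with (C^2 - S^2) by ring. reflexivity. Qed.
Lemma sf_neg c C S : sf c (- C) (- S) = sf c C S.
Proof. unfold sf. replace ((- C)^2 - (- S)^2) with (C^2 - S^2) by ring. reflexivity. Qed.

Lemma zt_shift c x : -1 < c < 0 ->
  zt1 c (x + PI) = negp (zt1 c x) /\ zt2 c (x + PI) = negp (zt2 c x) /\ zt3 c (x + PI) = negp (zt3 c x).
Proof.
  intros hc. pose proof (kf_nz c hc x) as kn.
  unfold zt1, zt2, zt3, Z1, Z2, Z3, negp. rewrite neg_cos, neg_sin, kf_neg, sf_neg. cbn [fst snd].
  repeat split; f_equal; field; auto.
Qed.

Lemma Dq_neg z w : Dq (negp z) (negp w) = Dq z w.
Proof. unfold Dq, negp; cbn [fst snd]. ring. Qed.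

Lemma shift_all al be ga c x : -1 < c < 0 ->
  zh al be ga c (x + PI) = negp (zh al be ga c x) /\ Wt al be ga c (x + PI) = Wt al be ga c x /\
  Lt1 al be ga c (x + PI) = Lt1 al be ga c x /\ Lt2 al be ga c (x + PI) = Lt2 al be ga c x /\
  Lt3 al be ga c (x + PI) = Lt3 al be ga c x.
Proof.
  intros hc. destruct (zt_shift c x hc) as [e1 [e2 e3]].
  unfold zh, Wt, Lt1, Lt2, Lt3. rewrite e1, e2, e3. rewrite !Dq_neg.
  unfold zhom, Wsum, wts. rewrite !Dq_neg. unfold negp. cbn [fst snd].
  repeat split; try reflexivity. f_equal; ring.
Qed.

Definition uq (x : R) := cos x ^ 2 - sin x ^ 2.
Definition tvq (c x : R) := sf c (cos x) (sin x) / kf c (cos x) (sin x) * (2 * cos x * sin x).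

Lemma Lt_formulas al be ga c x : -1 < c < 0 -> al + be + ga = 0 ->
  Lt1 al be ga c x = c * (- al * c + 3 * al * uq x + (ga - be) * tvq c x) /\
  Lt2 al be ga c x = c * (- ga * c + 3 * ga * uq x + (be - al) * tvq c x) /\
  Lt3 al be ga c x = c * (- be * c + 3 * be * uq x + (al - ga) * tvq c x).
Proof.
  intros hc hs. destruct (constr_D c (cos x) (sin x) hc (cos2sin2 x)) as [d1 [d2 d3]].
  unfold Lt1, Lt2, Lt3, zt1, zt2, zt3, lam1, uq, tvq. rewrite d1, d2, d3.
  replace ga with (- al - be) by lra. repeat split; ring.
Qed.

Lemma g_Pe c e d x : -1 < c < 0 -> c * (- e * c + 3 * e * uq x + d * tvq c x) = 0 -> Pe c e d (uq x) = 0.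
Proof.
  intros hc h.
  destruct (kf_props c (cos x) (sin x) hc (cos2sin2 x)) as [kp [kk [sp ss]]].
  apply Rmult_integral in h. destruct h as [h|h]; [lra|].
  apply (g_zero_Pe c e d (uq x) (2 * cos x * sin x) (kf c (cos x) (sin x)) (sf c (cos x) (sin x))); try lra.
  - unfold uq. rewrite kk. ring.
  - unfold uq. rewrite ss. ring.
  - unfold uq. pose proof (cos2sin2 x). transitivity ((cos x ^ 2 + sin x ^ 2)^2); [ring|]. rewrite H. ring.
  - unfold tvq in h. exact h.
Qed.

Definition window (lo hi : R) := (0 <= lo /\ hi <= PI / 2) \/ (PI / 2 <= lo /\ hi <= PI).

Lemma uq_cos2 x : uq x = cos (2 * x).
Proof. unfold uq. rewrite cos_2a. ring. Qed.

Lemma uq_inj lo hi x y : window lo hi -> lo <= x -> x < y -> y <= hi -> uq x <> uq y.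
Proof.
  intros w hx hxy hy. rewrite !uq_cos2. pose proof PI_RGT_0.
  destruct w as [[w1 w2]|[w1 w2]].
  - assert (cos (2 * y) < cos (2 * x)) by (apply cos_decreasing_1; lra). lra.
  - assert (cos (2 * x) < cos (2 * y)) by (apply cos_increasing_1; lra). lra.
Qed.

Lemma exists_nz c e d lo hi : -1 < c < 0 -> ~ (e = 0 /\ d = 0) -> window lo hi -> lo < hi ->
  exists x, lo < x < hi /\ c * (- e * c + 3 * e * uq x + d * tvq c x) <> 0.
Proof.
  intros hc hed w hlh.
  destruct (Classical_Prop.classic (exists x, lo < x < hi /\ c * (- e * c + 3 * e * uq x + d * tvq c x) <> 0)) as [H|H]; auto.
  exfalso. apply hed.
  assert (A : forall x, lo < x < hi -> Pe c e d (uq x) = 0).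
  { intros x hx. apply (g_Pe c e d x hc). destruct (Req_dec (c * (- e * c + 3 * e * uq x + d * tvq c x)) 0); auto.
    exfalso. apply H. exists x. auto. }
  set (h := (hi - lo) / 5).
  assert (hp : 0 < h) by (unfold h; lra).
  assert (D : forall x y, lo <= x -> x < y -> y <= hi -> uq x <> uq y) by (intros; apply (uq_inj lo hi); auto).
  apply (ed_zero c e d (uq (lo + h)) (uq (lo + 2 * h)) (uq (lo + 3 * h)) (uq (lo + 4 * h))); auto;
    try (apply D; unfold h in *; lra); apply A; unfold h in *; lra.
Qed.

Lemma window_sub l h l' h' : window l h -> l <= l' -> h' <= h -> window l' h'.
Proof. unfold window. intros [[a b]|[a b]] c d; [left|right]; lra. Qed.

Lemma refine (P : R -> Prop) (g : R -> R) lo hi :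
  lo < hi -> window lo hi -> continuity g -> (forall x, lo < x < hi -> P x) ->
  (forall l h, window l h -> l < h -> exists x, l < x < h /\ g x <> 0) ->
  exists lo' hi', lo <= lo' /\ lo' < hi' /\ hi' <= hi /\ forall x, lo' < x < hi' -> P x /\ g x <> 0.
Proof.
  intros hlh w hg hP hex.
  destruct (hex lo hi w hlh) as [x [hx gx]].
  destruct (continuous_neq_0 g x (hg x) gx) as [eps he].
  pose proof (cond_pos eps) as ep.
  exists (Rmax lo (x - eps / 2)), (Rmin hi (x + eps / 2)).
  split; [apply Rmax_l|]. split.
  { apply Rmax_lub_lt; apply Rmin_glb_lt; try lra. }
  split; [apply Rmin_l|].
  intros y [h1 h2].
  pose proof (Rmax_l lo (x - eps/2)). pose proof (Rmax_r lo (x - eps/2)).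
  pose proof (Rmin_l hi (x + eps/2)). pose proof (Rmin_r hi (x + eps/2)).
  split; [apply hP; lra|].
  replace y with (x + (y - x)) by ring. apply he. apply Rabs_def1; lra.
Qed.

Lemma good_exists al be ga c lo hi : -1 < c < 0 -> al + be + ga = 0 ->
  ~ (al = 0 /\ ga - be = 0) -> ~ (ga = 0 /\ be - al = 0) -> ~ (be = 0 /\ al - ga = 0) ->
  window lo hi -> lo < hi ->
  exists x, lo < x < hi /\ Lt1 al be ga c x <> 0 /\ Lt2 al be ga c x <> 0 /\ Lt3 al be ga c x <> 0.
Proof.
  intros hc hs n1 n2 n3 w hlh.
  destruct (cont_all al be ga c hc) as [_ [_ [_ [c1 [c2 c3]]]]].
  assert (ex : forall (g : R -> R) e d, (forall x, g x = c * (- e * c + 3 * e * uq x + d * tvq c x)) -> ~ (e = 0 /\ d = 0) ->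
     forall l h, window l h -> l < h -> exists x, l < x < h /\ g x <> 0).
  { intros g e d hgx hed l h wl hl. destruct (exists_nz c e d l h hc hed wl hl) as [x [hx gx]].
    exists x. rewrite hgx. auto. }
  destruct (refine (fun _ => True) (Lt1 al be ga c) lo hi hlh w c1 (fun _ _ => I)
     (ex _ al (ga - be) (fun x => proj1 (Lt_formulas al be ga c x hc hs)) n1)) as [l1 [h1 [a1 [b1 [d1 P1]]]]].
  destruct (refine (fun x => Lt1 al be ga c x <> 0) (Lt2 al be ga c) l1 h1 b1 (window_sub _ _ _ _ w a1 d1) c2
     (fun x hx => proj2 (P1 x hx))
     (ex _ ga (be - al) (fun x => proj1 (proj2 (Lt_formulas al be ga c x hc hs))) n2)) as [l2 [h2 [a2 [b2 [d2 P2]]]]].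
  assert (wa : lo <= l2) by lra. assert (wb : h2 <= hi) by lra.
  destruct (refine (fun x => Lt1 al be ga c x <> 0 /\ Lt2 al be ga c x <> 0) (Lt3 al be ga c) l2 h2 b2
     (window_sub lo hi l2 h2 w wa wb) c3
     (fun x hx => P2 x hx)
     (ex _ be (al - ga) (fun x => proj2 (proj2 (Lt_formulas al be ga c x hc hs))) n3)) as [l3 [h3 [a3 [b3 [d3 P3]]]]].
  exists ((l3 + h3) / 2). split; [lra|].
  assert (hm : l3 < (l3 + h3) / 2 < h3) by lra.
  destruct (P3 ((l3 + h3) / 2) hm) as [[q1 q2] q3]. auto.
Qed.

Lemma good_near al be ga c t1 dl : -1 < c < 0 -> al + be + ga = 0 ->
  ~ (al = 0 /\ ga - be = 0) -> ~ (ga = 0 /\ be - al = 0) -> ~ (be = 0 /\ al - ga = 0) ->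
  0 <= t1 <= PI -> 0 < dl ->
  exists x, Rabs (x - t1) < dl /\ Lt1 al be ga c x <> 0 /\ Lt2 al be ga c x <> 0 /\ Lt3 al be ga c x <> 0.
Proof.
  intros hc hs n1 n2 n3 ht hd. pose proof PI_RGT_0 as hpi.
  destruct (Rlt_le_dec t1 (PI/2)) as [h|h].
  - set (hi := Rmin (t1 + dl/2) (PI/2)).
    assert (hi1 : hi <= t1 + dl/2) by apply Rmin_l. assert (hi2 : hi <= PI/2) by apply Rmin_r.
    assert (hi3 : t1 < hi) by (apply Rmin_glb_lt; lra).
    destruct (good_exists al be ga c t1 hi hc hs n1 n2 n3 ltac:(left; lra) hi3) as [x [hx g]].
    exists x. split; auto. apply Rabs_def1; lra.
  - destruct (Rle_lt_or_eq_dec _ _ h) as [h'|h'].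
    + set (lo := Rmax (t1 - dl/2) (PI/2)).
      assert (lo1 : t1 - dl/2 <= lo) by apply Rmax_l. assert (lo2 : PI/2 <= lo) by apply Rmax_r.
      assert (lo3 : lo < t1) by (apply Rmax_lub_lt; lra).
      destruct (good_exists al be ga c lo t1 hc hs n1 n2 n3 ltac:(right; lra) lo3) as [x [hx g]].
      exists x. split; auto. apply Rabs_def1; lra.
    + set (lo := Rmax (t1 - dl/2) 0).
      assert (lo1 : t1 - dl/2 <= lo) by apply Rmax_l. assert (lo2 : 0 <= lo) by apply Rmax_r.
      assert (lo3 : lo < t1) by (apply Rmax_lub_lt; lra).
      destruct (good_exists al be ga c lo t1 hc hs n1 n2 n3 ltac:(left; lra) lo3) as [x [hx g]].
      exists x. split; auto. apply Rabs_def1; lra.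
Qed.

Lemma good_near2 al be ga c t0 dl : -1 < c < 0 -> al + be + ga = 0 ->
  ~ (al = 0 /\ ga - be = 0) -> ~ (ga = 0 /\ be - al = 0) -> ~ (be = 0 /\ al - ga = 0) ->
  0 <= t0 <= 2 * PI -> 0 < dl ->
  exists x, Rabs (x - t0) < dl /\ Lt1 al be ga c x <> 0 /\ Lt2 al be ga c x <> 0 /\ Lt3 al be ga c x <> 0.
Proof.
  intros hc hs n1 n2 n3 ht hd.
  destruct (Rle_lt_dec t0 PI) as [h|h].
  - apply good_near; auto; lra.
  - destruct (good_near al be ga c (t0 - PI) dl hc hs n1 n2 n3 ltac:(lra) hd) as [x [hx [g1 [g2 g3]]]].
    exists (x + PI). destruct (shift_all al be ga c x hc) as [_ [_ [e1 [e2 e3]]]].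
    rewrite e1, e2, e3. split; [|auto]. replace (x + PI - t0) with (x - (t0 - PI)) by ring. auto.
Qed.

Lemma Dpos (c : R) z w : -1 < c < 0 -> unit z -> unit w -> Dq z w = 3 - c^2 + 2 * c * Rm z w -> 0 < Dq z w.
Proof.
  intros hc uz uw hD. destruct z as [x1 y1], w as [x2 y2]. unfold unit, Dq, Rm in *; cbn [fst snd] in *.
  assert (hR : (x1*x2 - y1*y2)^2 + (x1*y2+y1*x2)^2 = (x1^2+y1^2)*(x2^2+y2^2)) by ring.
  rewrite uz, uw in hR. rewrite hD. set (m := x1*x2 - y1*y2) in *. set (n := x1*y2+y1*x2) in *.
  assert (m^2 <= 1) by (pose proof (pow2_ge_0 n); lra).
  assert (m <= 1) by nra. nra.
Qed.

Lemma constr_chords (c C S : R) : -1 < c < 0 -> C^2 + S^2 = 1 ->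
  let z1 := Z1 c C S in let z2 := Z2 c C S in let z3 := Z3 c C S in
  0 < Dq z2 z3 /\ 0 < Dq z3 z1 /\ 0 < Dq z1 z2.
Proof.
  intros hc h z1 z2 z3.
  destruct (constr_basic c C S hc h) as [u1 [u2 [u3 [hre him]]]]. fold z1 z2 z3 in u1, u2, u3, hre, him.
  split; [|split]; apply (Dpos c); auto;
  destruct z1 as [x1 y1] eqn:E1, z2 as [x2 y2] eqn:E2, z3 as [x3 y3] eqn:E3; unfold unit, Dq, Rm in *; cbn [fst snd] in *.
  - apply (chord c x2 y2 x3 y3 x1 y1); auto; lra.
  - apply (chord c x3 y3 x1 y1 x2 y2); auto; lra.
  - apply (chord c x1 y1 x2 y2 x3 y3); auto; lra.
Qed.

Lemma Wt_nz al be ga c x : -1 < c < 0 -> al + be + ga = 0 -> al * (be - al) - ga * (ga - be) <> 0 ->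
  Wt al be ga c x <> 0.
Proof.
  intros hc hs hdet hW.
  destruct (constr_basic c (cos x) (sin x) hc (cos2sin2 x)) as [u1 [u2 [u3 _]]].
  destruct (constr_chords c (cos x) (sin x) hc (cos2sin2 x)) as [p1 [p2 p3]].
  pose proof (W_zero al be ga _ _ _ hs u1 u2 u3 p1 p2 p3 hW) as HZ. cbv zeta in HZ.
  destruct (Lt_formulas al be ga c x hc hs) as [f1 [f2 f3]].
  unfold Lt1, Lt2, Lt3, zt1, zt2, zt3 in f1, f2, f3.
  rewrite f1, f2, f3 in HZ.
  set (X := 3 * uq x - c) in *. set (Y := tvq c x) in *.
  assert (g1 : - al * c + 3 * al * uq x + (ga - be) * Y = al * X + (ga - be) * Y) by (unfold X; ring).
  assert (g2 : - ga * c + 3 * ga * uq x + (be - al) * Y = ga * X + (be - al) * Y) by (unfold X; ring).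
  assert (g3 : - be * c + 3 * be * uq x + (al - ga) * Y = be * X + (al - ga) * Y) by (unfold X; ring).
  rewrite g1, g2, g3 in HZ.
  assert (cn : c <> 0) by lra.
  assert (Z : forall p, c * p = 0 -> p = 0).
  { intros p hp. apply Rmult_integral in hp. destruct hp; [lra|auto]. }
  assert (both : al * X + (ga - be) * Y = 0 /\ ga * X + (be - al) * Y = 0).
  { destruct HZ as [[h1|h1] [[h2|h2] [h3|h3]]]; apply Z in h1; apply Z in h2; apply Z in h3; split; try lra;
    replace be with (- al - ga) in * by lra; lra. }
  destruct both as [b1 b2].
  assert (hX : X = 0).
  { assert ((al * (be - al) - ga * (ga - be)) * X = 0) by (replace ((al * (be - al) - ga * (ga - be)) * X) with
      ((be - al) * (al * X + (ga - be) * Y) - (ga - be) * (ga * X + (be - al) * Y)) by ring; rewrite b1, b2; ring).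
    apply Rmult_integral in H. destruct H; [contradiction|auto]. }
  assert (hY : Y = 0).
  { assert ((al * (be - al) - ga * (ga - be)) * Y = 0) by (replace ((al * (be - al) - ga * (ga - be)) * Y) with
      (al * (ga * X + (be - al) * Y) - ga * (al * X + (ga - be) * Y)) by ring; rewrite b1, b2; ring).
    apply Rmult_integral in H. destruct H; [contradiction|auto]. }
  destruct (kf_props c (cos x) (sin x) hc (cos2sin2 x)) as [kp [kk [sp ss]]].
  unfold Y, tvq in hY.
  assert (hv : 2 * cos x * sin x = 0).
  { apply Rmult_integral in hY. destruct hY as [h|h]; auto.
    exfalso. unfold Rdiv in h. apply Rmult_integral in h. destruct h as [h|h]; [lra|].
    apply (Rinv_neq_0_compat (kf c (cos x) (sin x))); lra. }
  assert (hu : uq x ^ 2 = 1).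
  { pose proof (cos2sin2 x). unfold uq. transitivity ((cos x ^ 2 + sin x ^ 2)^2 - (2 * cos x * sin x)^2); [ring|].
    rewrite H, hv. ring. }
  unfold X in hX. assert (uq x = c / 3) by lra. rewrite H in hu. nra.
Qed.

Lemma unit_E al be ga c x : -1 < c < 0 -> al + be + ga = 0 -> Wt al be ga c x <> 0 ->
  (fst (zh al be ga c x) / Wt al be ga c x) ^ 2 + (snd (zh al be ga c x) / Wt al be ga c x) ^ 2 = 1.
Proof.
  intros hc hs hW.
  destruct (constr_basic c (cos x) (sin x) hc (cos2sin2 x)) as [u1 [u2 [u3 _]]].
  pose proof (zhom_norm al be ga _ _ _ hs u1 u2 u3) as hn.
  unfold zh, Wt, zt1, zt2, zt3 in *.
  transitivity ((fst (zhom al be ga (Z1 c (cos x) (sin x)) (Z2 c (cos x) (sin x)) (Z3 c (cos x) (sin x))) ^ 2 +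
     snd (zhom al be ga (Z1 c (cos x) (sin x)) (Z2 c (cos x) (sin x)) (Z3 c (cos x) (sin x))) ^ 2)
     / (Wsum al be ga (Z1 c (cos x) (sin x)) (Z2 c (cos x) (sin x)) (Z3 c (cos x) (sin x))) ^ 2); [field; auto|].
  rewrite hn. field. auto.
Qed.

Lemma cpt_of (f : R -> R) x0 : continuity_pt f x0 -> forall e, 0 < e -> exists d, 0 < d /\
  forall x, Rabs (x - x0) < d -> Rabs (f x - f x0) < e.
Proof.
  intros hf e he. destruct (hf e he) as [d [hd H]].
  exists d. split; auto. intros x hx.
  destruct (Req_dec x x0) as [->|hne].
  - rewrite Rminus_diag, Rabs_R0. auto.
  - apply (H x). split; [split; [exact I| auto]|]. exact hx.
Qed.

Lemma sq_lt (d e : R) : - e < d < e -> d ^ 2 < e ^ 2.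
Proof. intros h. nra. Qed.

Lemma density (a b al be ga : R) : 0 < b -> b < a -> al + be + ga = 0 ->
  ~ (al = 0 /\ ga - be = 0) -> ~ (ga = 0 /\ be - al = 0) -> ~ (be = 0 /\ al - ga = 0) ->
  al * (be - al) - ga * (ga - be) <> 0 ->
  forall X, on_ellipse a b X -> in_closure (locus a b (hL al be ga)) X.
Proof.
  intros hb hab hs n1 n2 n3 hdet X hX.
  destruct (consts a b hb hab) as [hc [hK1 [hK2 [hK [hk hkK]]]]].
  set (c := c0 a b) in *.
  destruct X as [X1 X2]. unfold on_ellipse in hX; cbn [fst snd] in hX.
  set (tx := X1 / a). set (ty := X2 / b).
  assert (ha : 0 < a) by lra.
  assert (ht : tx ^ 2 + ty ^ 2 = 1) by (unfold tx, ty; rewrite <- hX; field; lra).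
  destruct (cont_all al be ga c hc) as [cz1 [cz2 [cW _]]].
  set (F := fun x => fst (zh al be ga c x) * ty - snd (zh al be ga c x) * tx).
  assert (cF : continuity F).
  { unfold F. apply cminus; apply cmult; auto; apply cconst. }
  assert (FPI : F PI = - F 0).
  { unfold F. replace PI with (0 + PI) by ring. destruct (shift_all al be ga c 0 hc) as [e _].
    rewrite e. unfold negp; cbn [fst snd]. ring. }
  destruct (IVT_cor F 0 PI cF ltac:(pose proof PI_RGT_0; lra) ltac:(rewrite FPI; replace (F 0 * - F 0) with (- (F 0 * F 0)) by ring; pose proof (Rle_0_sqr (F 0)); unfold Rsqr in *; lra)) as [ts [hts hF]].
  set (Ex := fun x => fst (zh al be ga c x) / Wt al be ga c x).
  set (Ey := fun x => snd (zh al be ga c x) / Wt al be ga c x).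
  assert (hE : exists t0, 0 <= t0 <= 2 * PI /\ Ex t0 = tx /\ Ey t0 = ty).
  { pose proof (Wt_nz al be ga c ts hc hs hdet) as hW.
    pose proof (unit_E al be ga c ts hc hs hW) as hu. fold (Ex ts) (Ey ts) in hu.
    assert (hcr : Ex ts * ty - Ey ts * tx = 0).
    { unfold Ex, Ey. unfold F in hF. transitivity ((fst (zh al be ga c ts) * ty - snd (zh al be ga c ts) * tx) / Wt al be ga c ts);
      [field; auto| rewrite hF; field; auto]. }
    set (p := Ex ts * tx + Ey ts * ty).
    assert (hp : p ^ 2 = 1).
    { assert ((Ex ts * tx + Ey ts * ty)^2 + (Ex ts * ty - Ey ts * tx)^2 = (Ex ts ^2 + Ey ts^2) * (tx^2 + ty^2)) by ring.
      rewrite hcr, hu, ht in H. unfold p. lra. }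
    assert (hq : (Ex ts - p * tx)^2 + (Ey ts - p * ty)^2 = 0).
    { transitivity ((Ex ts ^ 2 + Ey ts ^ 2) - 2 * p * (Ex ts * tx + Ey ts * ty) + p^2 * (tx^2 + ty^2)); [ring|].
      rewrite hu, ht. change (Ex ts * tx + Ey ts * ty) with p. replace (2 * p * p) with (2 * p ^ 2) by ring. lra. }
    destruct (sumsq0 (Ex ts - p * tx) (Ey ts - p * ty)) as [q1 q2]; [lra|].
    assert (pp : p = 1 \/ p = -1).
    { assert ((p - 1) * (p + 1) = 0) by (replace ((p - 1) * (p + 1)) with (p ^ 2 - 1) by ring; lra).
      apply Rmult_integral in H. destruct H; [left|right]; lra. }
    destruct pp as [pp|pp].
    - exists ts. rewrite pp in q1, q2. pose proof PI_RGT_0. split; [lra|]. split; lra.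
    - exists (ts + PI). pose proof PI_RGT_0. split; [lra|].
      destruct (shift_all al be ga c ts hc) as [e1 [e2 _]].
      unfold Ex, Ey in *. rewrite e1, e2. unfold negp; cbn [fst snd].
      rewrite pp in q1, q2.
      split.
      + transitivity (- (fst (zh al be ga c ts) / Wt al be ga c ts)); [field; auto| lra].
      + transitivity (- (snd (zh al be ga c ts) / Wt al be ga c ts)); [field; auto| lra]. }
  destruct hE as [t0 [ht0 [ex ey]]].
  intros eps heps.
  set (eta := eps / (2 * a)).
  assert (heta : 0 < eta) by (unfold eta; apply Rdiv_lt_0_compat; lra).
  pose proof (Wt_nz al be ga c t0 hc hs hdet) as hW0.
  assert (cEx : continuity_pt Ex t0) by (apply (continuity_pt_div _ _ t0 (cz1 t0) (cW t0) hW0)).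
  assert (cEy : continuity_pt Ey t0) by (apply (continuity_pt_div _ _ t0 (cz2 t0) (cW t0) hW0)).
  destruct (cpt_of Ex t0 cEx eta heta) as [d1 [hd1 H1]].
  destruct (cpt_of Ey t0 cEy eta heta) as [d2 [hd2 H2]].
  destruct (good_near2 al be ga c t0 (Rmin d1 d2) hc hs n1 n2 n3 ht0 ltac:(apply Rmin_pos; auto))
    as [x [hx [g1 [g2 g3]]]].
  pose proof (Rmin_l d1 d2). pose proof (Rmin_r d1 d2).
  assert (b1 : Rabs (Ex x - tx) < eta) by (rewrite <- ex; apply H1; lra).
  assert (b2 : Rabs (Ey x - ty) < eta) by (rewrite <- ey; apply H2; lra).
  destruct (constr_basic c (cos x) (sin x) hc (cos2sin2 x)) as [u1 [u2 [u3 [hre him]]]].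
  destruct (tri_periodic a b c (KK a b) (kap a b) _ _ _ ha hb hc hK1 hK2 hk hkK u1 u2 u3 hre him) as [hper _].
  destruct (center_tri a b c (KK a b) (kap a b) al be ga _ _ _ hs ha hb hc hK1 hK2 hk hkK u1 u2 u3 hre him g1 g2 g3)
    as [_ hcen].
  eexists. split.
  - exists (Tp a b (Z1 c (cos x) (sin x))), (Tp a b (Z2 c (cos x) (sin x))), (Tp a b (Z3 c (cos x) (sin x))).
    split; [exact hper| exact hcen].
  - fold (zt1 c x) (zt2 c x) (zt3 c x). fold (zh al be ga c x) (Wt al be ga c x). fold (Ex x) (Ey x).
    unfold Defs.dist, Tp; cbn [fst snd].
    replace X1 with (a * tx) by (unfold tx; field; lra). replace X2 with (b * ty) by (unfold ty; field; lra).
    rewrite <- (sqrt_square eps) by lra.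
    apply sqrt_lt_1_alt. split; [apply Rplus_le_le_0_compat; apply pow2_ge_0|].
    apply Rabs_def2 in b1. apply Rabs_def2 in b2.
    pose proof (sq_lt (Ex x - tx) eta ltac:(lra)) as s1.
    pose proof (sq_lt (Ey x - ty) eta ltac:(lra)) as s2.
    assert (e1 : (a * tx - a * Ex x) ^ 2 < a^2 * eta^2).
    { replace ((a * tx - a * Ex x) ^ 2) with (a^2 * (Ex x - tx)^2) by ring.
      apply Rmult_lt_compat_l; [apply pow_lt; lra|]. exact s1. }
    assert (e2 : (b * ty - b * Ey x) ^ 2 <= a^2 * eta^2).
    { replace ((b * ty - b * Ey x) ^ 2) with (b^2 * (Ey x - ty)^2) by ring.
      assert (hba : b^2 <= a^2) by (apply pow_incr; lra).
      apply Rmult_le_compat; try apply pow2_ge_0; lra. }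
    assert (e3 : a^2 * eta^2 * 2 = eps * eps / 2) by (unfold eta; field; lra).
    assert (0 < eps * eps) by (apply Rmult_lt_0_compat; lra).
    lra.
Qed.

Lemma locus_ext a b h h' : (forall x y z, h x y z = h' x y z) -> forall Y, locus a b h Y -> locus a b h' Y.
Proof.
  intros H Y [P1 [P2 [P3 [hp hc]]]]. exists P1, P2, P3. split; auto. rewrite <- hc. symmetry. apply center_ext. auto.
Qed.

Lemma closure_mono (S S' : pt -> Prop) X : (forall Y, S Y -> S' Y) -> in_closure S X -> in_closure S' X.
Proof. intros H hc eps he. destruct (hc eps he) as [Y [hY hd]]. exists Y. auto. Qed.

Lemma full_part (a b al be ga : R) (h : trilin_fun) : 0 < b -> b < a -> al + be + ga = 0 ->
  ~ (al = 0 /\ ga - be = 0) -> ~ (ga = 0 /\ be - al = 0) -> ~ (be = 0 /\ al - ga = 0) ->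
  al * (be - al) - ga * (ga - be) <> 0 -> (forall x y z, h x y z = hL al be ga x y z) ->
  (forall P1 P2 P3 X, periodic3 a b P1 P2 P3 -> center h P1 P2 P3 = Some X -> on_ellipse a b X) /\
  (forall X, in_closure (locus a b h) X <-> on_ellipse a b X).
Proof.
  intros hb hab hs n1 n2 n3 hdet hh.
  assert (P : forall P1 P2 P3 X, periodic3 a b P1 P2 P3 -> center h P1 P2 P3 = Some X -> on_ellipse a b X).
  { intros P1 P2 P3 X hp hc. rewrite (center_ext h (hL al be ga)) in hc by exact hh.
    apply (center_on_ellipse al be ga a b P1 P2 P3 X); auto; lra. }
  split; auto. intros X. split.
  - apply closure_on_ellipse; try lra. intros Y [P1 [P2 [P3 [hp hc]]]]. eapply P; eauto.
  - intros hX. apply (closure_mono (locus a b (hL al be ga))).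
    + apply locus_ext. intros; symmetry; auto.
    + apply density; auto.
Qed.

Theorem theorem1 (a b : R) (hab : a > b) (hb : b > 0) :
  (forall P1 P2 P3 X, periodic3 a b P1 P2 P3 ->
     center h88 P1 P2 P3 = Some X -> on_ellipse a b X) /\
  (forall X, in_closure (locus a b h88) X <-> on_ellipse a b X) /\
  (forall P1 P2 P3 X, periodic3 a b P1 P2 P3 ->
     center h100 P1 P2 P3 = Some X -> on_ellipse a b X) /\
  (forall X, in_closure (locus a b h100) X <-> on_ellipse a b X).
Proof.
  destruct (full_part a b (-2) 1 1 h88 ltac:(lra) ltac:(lra) ltac:(lra) ltac:(lra) ltac:(lra) ltac:(lra) ltac:(lra) h88_L)
    as [A B].
  destruct (full_part a b 0 1 (-1) h100 ltac:(lra) ltac:(lra) ltac:(lra) ltac:(lra) ltac:(lra) ltac:(lra) ltac:(lra) h100_L)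
    as [C D].
  auto.
Qed.
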